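(* Let $J=JCK(Z,\delta)$ and $K=Z\oplus Zx$. Relative to the $\mathbb Z_2^2$-grading of $\mathrm{Der}(J)$ induced by the grading of $J$, one has $\mathrm{Der}(J)_{\bar0}^{[\bar0,\bar0]}=\{\tilde\partial:\partial\in\mathrm{Der}(K)_{\bar0}\}$, $\mathrm{Inder}(J)_{\bar0}^{[\bar0,\bar0]}=D(x,Zx)=\{\tilde\partial:\partial\in\mathrm{Inder}(K)_{\bar0}\}=\{\tilde\partial:\partial=\check\mu \text{ for some }\mu\in Z\delta\}$, $\mathrm{Der}(J)_{\bar0}^{[\bar1,\bar0]}=D(w_2,Zw_3)$, $\mathrm{Der}(J)_{\bar0}^{[\bar0,\bar1]}=D(w_3,Zw_1)$, $\mathrm{Der}(J)_{\bar0}^{[\bar1,\bar1]}=D(w_1,Zw_2)$, and $\mathrm{Der}(J)_{\bar0}$ is the direct sum of these four components; in particular every even derivation of $J$ with component outside $[\bar0,\bar0]$ is inner.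
   Context: Let $\mathbb F$ be a field of characteristic $\neq 2$, $Z$ a unital commutative associative $\mathbb F$-algebra, and $\delta$ a derivation of $Z$ such that $Z\delta(Z)=Z$ (the $\mathbb F$-span of all products $f\delta(g)$, $f,g\in Z$, is $Z$). The Cheng-Kac Jordan superalgebra $J=JCK(Z,\delta)=J_{\bar0}\oplus J_{\bar1}$ is defined as follows: $J_{\bar0}=Z1\oplus Zw_1\oplus Zw_2\oplus Zw_3$ and $J_{\bar1}=Zx\oplus Zx_1\oplus Zx_2\oplus Zx_3$ are free $Z$-modules of rank 4; $J_{\bar0}$ is the $Z$-algebra $(\mathbb F1\oplus\mathbb Fw_1\oplus\mathbb Fw_2\oplus\mathbb Fw_3)\otimes_{\mathbb F}Z$ with $1$ the identity, $w_1^2=w_2^2=1$, $w_3^2=-1$, $w_iw_j=0$ for $i\ne j$. For $f,g\in Z$ and $i,j\in\{1,2,3\}$ the remaining products are: $f(gx)=(fg)x$, $f(gx_j)=(fg)x_j$, $(fw_i)(gx)=(\delta(f)g)x_i$, $(fw_i)(gx_j)=-(fg)x_{i\times j}$, $(fx)(gx)=\delta(f)g-f\delta(g)$, $(fx)(gx_j)=-(fg)w_j$, $(fx_i)(gx)=(fg)w_i$, $(fx_i)(gx_j)=0$, extended by supercommutativity ($ab=(-1)^{|a||b|}ba$), where $x_{1\times2}=-x_{2\times1}=x_3$, $x_{1\times3}=-x_{3\times1}=x_2$, $x_{3\times2}=-x_{2\times3}=x_1$, $x_{i\times i}=0$. $J$ is $\mathbb Z_2^2$-graded by $J^{[\bar0,\bar0]}=Z\oplus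 Zx$, $J^{[\bar1,\bar0]}=Zw_1\oplus Zx_1$, $J^{[\bar0,\bar1]}=Zw_2\oplus Zx_2$, $J^{[\bar1,\bar1]}=Zw_3\oplus Zx_3$, and $\mathrm{Der}(J)^{\alpha}$ denotes the derivations mapping each $J^{\beta}$ into $J^{\alpha+\beta}$. Derivations are super derivations (homogeneous $d$ with $d(ab)=d(a)b+(-1)^{|d||a|}ad(b)$); $D(a,b)$ is $c\mapsto a(bc)-(-1)^{|a||b|}b(ac)$; $\mathrm{Inder}$ is the span of all $D(a,b)$; $D(A,B)$ denotes the span of $D(a,b)$, $a\in A,b\in B$. $K=Z\oplus Zx$ is a subalgebra of $J$. For $\mu\in\mathrm{Der}(Z)$ with $[\mu,\delta]=2a\delta$, $\check\mu$ is the even derivation of $K$ with $\check\mu|_Z=\mu$, $\check\mu(x)=ax$; every even derivation of $K$ is of this form. For $\partial\in\mathrm{Der}(K)_{\bar0}$ with $\mu=\partial|_Z$ and $a\in Z$ such that $\partial(x)=ax$, $\tilde\partial$ denotes the even derivation of $J$ given by $\tilde\partial|_K=\partial$, $\tilde\partial(fw_i)=\mu(f)w_i$, $\tilde\partial(fx_i)=(\mu(f)-af)x_i$ for $f\in Z$, $i=1,2,3$. *)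

(* Defs.v *)
From HB Require Import structures.
From mathcomp Require Import all_boot all_order all_algebra.
Set Implicit Arguments. Unset Strict Implicit. Unset Printing Implicit Defensive.
Import GRing.Theory.
Local Open Scope ring_scope.

(* An element of J is stored as ((f0,f1,f2,f3),(g0,g1,g2,g3)) meaning
   f0*1 + f1 w1 + f2 w2 + f3 w3 + g0 x + g1 x1 + g2 x2 + g3 x3,
   so J_0 is the first component and J_1 the second one. *)

Section CK.
Context {F : fieldType} {Z : comAlgType F}.

Definition J : Type := ((Z * Z * Z * Z) * (Z * Z * Z * Z))%type.

Definition mkJ (f0 f1 f2 f3 g0 g1 g2 g3 : Z) : J :=
  ((f0, f1, f2, f3), (g0, g1, g2, g3)).

Definition e0 (a : J) : Z := a.1.1.1.1.
Definition e1 (a : J) : Z := a.1.1.1.2.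
Definition e2 (a : J) : Z := a.1.1.2.
Definition e3 (a : J) : Z := a.1.2.
Definition o0 (a : J) : Z := a.2.1.1.1.
Definition o1 (a : J) : Z := a.2.1.1.2.
Definition o2 (a : J) : Z := a.2.1.2.
Definition o3 (a : J) : Z := a.2.2.

(* the product, obtained by bilinear extension of the multiplication table
   (and supercommutativity) of the context *)
Definition Jmul (delta : Z -> Z) (a b : J) : J :=
  mkJ
    (e0 a * e0 b + e1 a * e1 b + e2 a * e2 b - e3 a * e3 b
       + (delta (o0 a) * o0 b - o0 a * delta (o0 b)))
    (e0 a * e1 b + e1 a * e0 b + (- (o0 a * o1 b) + o1 a * o0 b))
    (e0 a * e2 b + e2 a * e0 b + (- (o0 a * o2 b) + o2 a * o0 b))
    (e0 a * e3 b + e3 a * e0 b + (- (o0 a * o3 b) + o3 a * o0 b))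
    (e0 a * o0 b + e0 b * o0 a)
    ((e0 a * o1 b + delta (e1 a) * o0 b - e3 a * o2 b + e2 a * o3 b)
     + (e0 b * o1 a + delta (e1 b) * o0 a - e3 b * o2 a + e2 b * o3 a))
    ((e0 a * o2 b + delta (e2 a) * o0 b - e1 a * o3 b + e3 a * o1 b)
     + (e0 b * o2 a + delta (e2 b) * o0 a - e1 b * o3 a + e3 b * o1 a))
    ((e0 a * o3 b + delta (e3 a) * o0 b - e1 a * o2 b + e2 a * o1 b)
     + (e0 b * o3 a + delta (e3 b) * o0 a - e1 b * o2 a + e2 b * o1 a)).

Definition isEven (a : J) : Prop := a.2 = 0.
Definition isOdd (a : J) : Prop := a.1 = 0.
Definition homog (p : bool) (a : J) : Prop := if p then isOdd a else isEven a.

Definition ecoord (i : 'I_4) (a : J) : Z :=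
  match val i with 0%N => e0 a | 1%N => e1 a | 2%N => e2 a | _ => e3 a end.
Definition ocoord (i : 'I_4) (a : J) : Z :=
  match val i with 0%N => o0 a | 1%N => o1 a | 2%N => o2 a | _ => o3 a end.
Definition degOf (i : 'I_4) : bool * bool := (odd (val i), (2 <= val i)%N).
Definition inGr (al : bool * bool) (a : J) : Prop :=
  forall i : 'I_4, degOf i <> al -> ecoord i a = 0 /\ ocoord i a = 0.
Definition addGr (al be : bool * bool) : bool * bool :=
  (addb al.1 be.1, addb al.2 be.2).

Definition linJ (d : J -> J) : Prop :=
  forall (k : F) (u v : J), d (k *: u + v) = k *: d u + d v.
Definition evenMapJ (d : J -> J) : Prop :=
  (forall a, isEven a -> isEven (d a)) /\ (forall a, isOdd a -> isOdd (d a)).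
Definition gradMapJ (al : bool * bool) (d : J -> J) : Prop :=
  forall be a, inGr be a -> inGr (addGr al be) (d a).
Definition DerJ0 (delta : Z -> Z) (d : J -> J) : Prop :=
  linJ d /\ evenMapJ d /\
  forall a b, d (Jmul delta a b) = Jmul delta (d a) b + Jmul delta a (d b).
Definition DerJ0g (delta : Z -> Z) (al : bool * bool) (d : J -> J) : Prop :=
  DerJ0 delta d /\ gradMapJ al d.

Definition Dop (delta : Z -> Z) (pa pb : bool) (a b : J) : J -> J :=
  fun c => Jmul delta a (Jmul delta b c)
           - ((-1 : F) ^+ (pa && pb)) *: Jmul delta b (Jmul delta a c).

Definition Dspan (delta : Z -> Z) (A B : J -> Prop) (pA pB : bool)
    (d : J -> J) : Prop :=
  exists (n : nat) (k : 'I_n -> F) (xs ys : 'I_n -> J),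
    (forall i, A (xs i) /\ B (ys i)) /\
    forall c, d c = \sum_(i < n) k i *: Dop delta pA pB (xs i) (ys i) c.

Definition InderJ (delta : Z -> Z) (d : J -> J) : Prop :=
  exists (n : nat) (k : 'I_n -> F) (pa pb : 'I_n -> bool) (xs ys : 'I_n -> J),
    (forall i, homog (pa i) (xs i) /\ homog (pb i) (ys i)) /\
    forall c, d c = \sum_(i < n) k i *: Dop delta (pa i) (pb i) (xs i) (ys i) c.

Definition InderJ00 (delta : Z -> Z) (d : J -> J) : Prop :=
  InderJ delta d /\ evenMapJ d /\ gradMapJ (false, false) d.

Definition xJ : J := mkJ 0 0 0 0 1 0 0 0.
Definition w1 : J := mkJ 0 1 0 0 0 0 0 0.
Definition w2 : J := mkJ 0 0 1 0 0 0 0 0.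
Definition w3 : J := mkJ 0 0 0 1 0 0 0 0.
Definition ZxJ (b : J) : Prop := exists g : Z, b = mkJ 0 0 0 0 g 0 0 0.
Definition Zw1 (b : J) : Prop := exists f : Z, b = mkJ 0 f 0 0 0 0 0 0.
Definition Zw2 (b : J) : Prop := exists f : Z, b = mkJ 0 0 f 0 0 0 0 0.
Definition Zw3 (b : J) : Prop := exists f : Z, b = mkJ 0 0 0 f 0 0 0 0.

(* The subalgebra K = Z + Zx; (f, g) : K stands for f + g x *)
Definition K : Type := (Z * Z)%type.
Definition iK (k : K) : J := mkJ k.1 0 0 0 k.2 0 0 0.
Definition pK (a : J) : K := (e0 a, o0 a).
Definition Kmul (delta : Z -> Z) (k l : K) : K := pK (Jmul delta (iK k) (iK l)).

Definition isEvenK (k : K) : Prop := k.2 = 0.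
Definition isOddK (k : K) : Prop := k.1 = 0.
Definition homogK (p : bool) (k : K) : Prop := if p then isOddK k else isEvenK k.
Definition linK (d : K -> K) : Prop :=
  forall (c : F) (u v : K), d (c *: u + v) = c *: d u + d v.
Definition evenMapK (d : K -> K) : Prop :=
  (forall k, isEvenK k -> isEvenK (d k)) /\ (forall k, isOddK k -> isOddK (d k)).
Definition DerK0 (delta : Z -> Z) (d : K -> K) : Prop :=
  linK d /\ evenMapK d /\
  forall k l, d (Kmul delta k l) = Kmul delta (d k) l + Kmul delta k (d l).
Definition DopK (delta : Z -> Z) (pa pb : bool) (a b : K) : K -> K :=
  fun c => Kmul delta a (Kmul delta b c)
           - ((-1 : F) ^+ (pa && pb)) *: Kmul delta b (Kmul delta a c).
Definition InderK (delta : Z -> Z) (d : K -> K) : Prop :=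
  exists (n : nat) (k : 'I_n -> F) (pa pb : 'I_n -> bool) (xs ys : 'I_n -> K),
    (forall i, homogK (pa i) (xs i) /\ homogK (pb i) (ys i)) /\
    forall c, d c = \sum_(i < n) k i *: DopK delta (pa i) (pb i) (xs i) (ys i) c.
Definition InderK0 (delta : Z -> Z) (d : K -> K) : Prop :=
  InderK delta d /\ evenMapK d.

Definition checkK (mu : Z -> Z) (a : Z) : K -> K :=
  fun k => (mu k.1, mu k.2 + a * k.2).

Definition tildeJ (d : K -> K) : J -> J :=
  let mu := fun f : Z => (d (f, 0)).1 in
  let a := (d (0, 1)).2 in
  fun c => iK (d (e0 c, o0 c))
           + mkJ 0 (mu (e1 c)) (mu (e2 c)) (mu (e3 c))
                 0 (mu (o1 c) - a * o1 c) (mu (o2 c) - a * o2 c)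
                   (mu (o3 c) - a * o3 c).

End CK.

(* Main.v *)
Require Import Defs.
From HB Require Import structures.
From mathcomp Require Import all_boot all_order all_algebra.
From Stdlib Require Import Ring FunctionalExtensionality.
Import GRing.Theory.
Local Open Scope ring_scope.
Set Implicit Arguments. Unset Strict Implicit. Unset Printing Implicit Defensive.

Section Main.
Variable F : fieldType.
Variable Z : comAlgType F.
Variable delta : Z -> Z.
Hypothesis hchar : 2%N \notin [pchar F].
Hypothesis hlin : forall (k : F) (u v : Z), delta (k *: u + v) = k *: delta u + delta v.
Hypothesis hleib : forall u v : Z, delta (u * v) = delta u * v + u * delta v.
Hypothesis hspan : forall z : Z, exists (n : nat) (k : 'I_n -> F) (fs gs : 'I_n -> Z),
        z = \sum_(i < n) k i *: (fs i * delta (gs i)).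

Notation JJ := (@J F Z).

Definition zadd (x y : Z) : Z := x + y.
Definition zmul (x y : Z) : Z := x * y.
Definition zopp (x : Z) : Z := - x.
Definition zsub (x y : Z) : Z := x - y.
Definition zzero : Z := 0.
Definition zone : Z := 1.
Lemma Zrt : @ring_theory Z zzero zone zadd zmul zsub zopp eq.
Proof.
split; rewrite /zadd/zmul/zsub/zopp/zzero/zone => *;
 [exact: add0r|exact: addrC|exact: addrA|exact: mul1r|exact: mulrC|exact: mulrA|exact: mulrDl|done|exact: subrr].
Qed.
Add Ring Zr : Zrt.
Ltac canon t :=
  lazymatch t with
  | @Algebra.add _ ?x ?y => let x' := canon x in let y' := canon y in constr:(zadd x' y')
  | @GRing.mul _ ?x ?y => let x' := canon x in let y' := canon y in constr:(zmul x' y')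
  | @Algebra.opp _ ?x => let x' := canon x in constr:(zopp x')
  | @Algebra.zero _ => constr:(zzero)
  | @GRing.one _ => constr:(zone)
  | _ => t
  end.
Ltac zring := lazymatch goal with |- ?x = ?y =>
  let x' := canon x in let y' := canon y in change (x' = y'); ring end.

Definition cst (k : F) : Z := k%:A.
Lemma scE (k : F) (x : Z) : k *: x = cst k * x.
Proof. by rewrite /cst mulr_algl. Qed.

Lemma dD u v : delta (u + v) = delta u + delta v.
Proof. by rewrite -[u in LHS]scale1r hlin scale1r. Qed.
Lemma d0 : delta 0 = 0.
Proof. have H := dD 0 0; rewrite addr0 in H. by apply: (addrI (delta 0)); rewrite -H addr0. Qed.
Lemma dN u : delta (- u) = - delta u.
Proof. by apply/eqP; rewrite -subr_eq0 opprK -dD addNr d0. Qed.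
Lemma dZ k u : delta (k *: u) = k *: delta u.
Proof. by rewrite -[k *: u]addr0 hlin d0 addr0. Qed.
Lemma d1 : delta 1 = 0.
Proof. have H := hleib 1 1; rewrite !mul1r !mulr1 in H. by apply: (addrI (delta 1)); rewrite -H addr0. Qed.
Lemma dcst k : delta (cst k) = 0.
Proof. by rewrite /cst dZ d1 scaler0. Qed.
Definition dM := hleib.

Ltac dpush := repeat first [rewrite dD | rewrite dN | rewrite dM | rewrite d0 | rewrite d1 | rewrite dcst].

Lemma Jext (u v : JJ) : e0 u = e0 v -> e1 u = e1 v -> e2 u = e2 v -> e3 u = e3 v ->
  o0 u = o0 v -> o1 u = o1 v -> o2 u = o2 v -> o3 u = o3 v -> u = v.
Proof.
case: u => [[[[? ?] ?] ?] [[[? ?] ?] ?]]; case: v => [[[[? ?] ?] ?] [[[? ?] ?] ?]].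
rewrite /e0/e1/e2/e3/o0/o1/o2/o3 /= => -> -> -> -> -> -> -> ->. done.
Qed.

Lemma e0D (u v : JJ) : e0 (u + v) = e0 u + e0 v. Proof. by []. Qed.
Lemma e0N (u : JJ) : e0 (- u) = - e0 u. Proof. by []. Qed.
Lemma e0Z k (u : JJ) : e0 (k *: u) = cst k * e0 u. Proof. by rewrite -scE. Qed.
Lemma e00 : e0 (0 : JJ) = 0. Proof. by []. Qed.
Lemma e1D (u v : JJ) : e1 (u + v) = e1 u + e1 v. Proof. by []. Qed.
Lemma e1N (u : JJ) : e1 (- u) = - e1 u. Proof. by []. Qed.
Lemma e1Z k (u : JJ) : e1 (k *: u) = cst k * e1 u. Proof. by rewrite -scE. Qed.
Lemma e10 : e1 (0 : JJ) = 0. Proof. by []. Qed.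
Lemma e2D (u v : JJ) : e2 (u + v) = e2 u + e2 v. Proof. by []. Qed.
Lemma e2N (u : JJ) : e2 (- u) = - e2 u. Proof. by []. Qed.
Lemma e2Z k (u : JJ) : e2 (k *: u) = cst k * e2 u. Proof. by rewrite -scE. Qed.
Lemma e20 : e2 (0 : JJ) = 0. Proof. by []. Qed.
Lemma e3D (u v : JJ) : e3 (u + v) = e3 u + e3 v. Proof. by []. Qed.
Lemma e3N (u : JJ) : e3 (- u) = - e3 u. Proof. by []. Qed.
Lemma e3Z k (u : JJ) : e3 (k *: u) = cst k * e3 u. Proof. by rewrite -scE. Qed.
Lemma e30 : e3 (0 : JJ) = 0. Proof. by []. Qed.
Lemma o0D (u v : JJ) : o0 (u + v) = o0 u + o0 v. Proof. by []. Qed.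
Lemma o0N (u : JJ) : o0 (- u) = - o0 u. Proof. by []. Qed.
Lemma o0Z k (u : JJ) : o0 (k *: u) = cst k * o0 u. Proof. by rewrite -scE. Qed.
Lemma o00 : o0 (0 : JJ) = 0. Proof. by []. Qed.
Lemma o1D (u v : JJ) : o1 (u + v) = o1 u + o1 v. Proof. by []. Qed.
Lemma o1N (u : JJ) : o1 (- u) = - o1 u. Proof. by []. Qed.
Lemma o1Z k (u : JJ) : o1 (k *: u) = cst k * o1 u. Proof. by rewrite -scE. Qed.
Lemma o10 : o1 (0 : JJ) = 0. Proof. by []. Qed.
Lemma o2D (u v : JJ) : o2 (u + v) = o2 u + o2 v. Proof. by []. Qed.
Lemma o2N (u : JJ) : o2 (- u) = - o2 u. Proof. by []. Qed.
Lemma o2Z k (u : JJ) : o2 (k *: u) = cst k * o2 u. Proof. by rewrite -scE. Qed.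
Lemma o20 : o2 (0 : JJ) = 0. Proof. by []. Qed.
Lemma o3D (u v : JJ) : o3 (u + v) = o3 u + o3 v. Proof. by []. Qed.
Lemma o3N (u : JJ) : o3 (- u) = - o3 u. Proof. by []. Qed.
Lemma o3Z k (u : JJ) : o3 (k *: u) = cst k * o3 u. Proof. by rewrite -scE. Qed.
Lemma o30 : o3 (0 : JJ) = 0. Proof. by []. Qed.
Ltac csimp := rewrite ?e0D ?e0N ?e0Z ?e00 ?e1D ?e1N ?e1Z ?e10 ?e2D ?e2N ?e2Z ?e20 ?e3D ?e3N ?e3Z ?e30 ?o0D ?o0N ?o0Z ?o00 ?o1D ?o1N ?o1Z ?o10 ?o2D ?o2N ?o2Z ?o20 ?o3D ?o3N ?o3Z ?o30.
Lemma e0mk (x0 x1 x2 x3 x4 x5 x6 x7 : Z) : e0 (mkJ x0 x1 x2 x3 x4 x5 x6 x7 : JJ) = x0. Proof. by []. Qed.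
Lemma e1mk (x0 x1 x2 x3 x4 x5 x6 x7 : Z) : e1 (mkJ x0 x1 x2 x3 x4 x5 x6 x7 : JJ) = x1. Proof. by []. Qed.
Lemma e2mk (x0 x1 x2 x3 x4 x5 x6 x7 : Z) : e2 (mkJ x0 x1 x2 x3 x4 x5 x6 x7 : JJ) = x2. Proof. by []. Qed.
Lemma e3mk (x0 x1 x2 x3 x4 x5 x6 x7 : Z) : e3 (mkJ x0 x1 x2 x3 x4 x5 x6 x7 : JJ) = x3. Proof. by []. Qed.
Lemma o0mk (x0 x1 x2 x3 x4 x5 x6 x7 : Z) : o0 (mkJ x0 x1 x2 x3 x4 x5 x6 x7 : JJ) = x4. Proof. by []. Qed.
Lemma o1mk (x0 x1 x2 x3 x4 x5 x6 x7 : Z) : o1 (mkJ x0 x1 x2 x3 x4 x5 x6 x7 : JJ) = x5. Proof. by []. Qed.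
Lemma o2mk (x0 x1 x2 x3 x4 x5 x6 x7 : Z) : o2 (mkJ x0 x1 x2 x3 x4 x5 x6 x7 : JJ) = x6. Proof. by []. Qed.
Lemma o3mk (x0 x1 x2 x3 x4 x5 x6 x7 : Z) : o3 (mkJ x0 x1 x2 x3 x4 x5 x6 x7 : JJ) = x7. Proof. by []. Qed.
Ltac mksimp := rewrite ?e0mk ?e1mk ?e2mk ?e3mk ?o0mk ?o1mk ?o2mk ?o3mk.
Ltac jcoord := apply: Jext; csimp; cbn [e0 e1 e2 e3 o0 o1 o2 o3 mkJ fst snd Jmul].

Definition iota (h : Z) : JJ := mkJ h 0 0 0 0 0 0 0.
Definition x1J : JJ := mkJ 0 0 0 0 0 1 0 0.
Definition x2J : JJ := mkJ 0 0 0 0 0 0 1 0.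
Definition x3J : JJ := mkJ 0 0 0 0 0 0 0 1.

Lemma e0_w1 : e0 (w1 : JJ) = 0. Proof. by []. Qed.
Lemma e1_w1 : e1 (w1 : JJ) = 1. Proof. by []. Qed.
Lemma e2_w1 : e2 (w1 : JJ) = 0. Proof. by []. Qed.
Lemma e3_w1 : e3 (w1 : JJ) = 0. Proof. by []. Qed.
Lemma o0_w1 : o0 (w1 : JJ) = 0. Proof. by []. Qed.
Lemma o1_w1 : o1 (w1 : JJ) = 0. Proof. by []. Qed.
Lemma o2_w1 : o2 (w1 : JJ) = 0. Proof. by []. Qed.
Lemma o3_w1 : o3 (w1 : JJ) = 0. Proof. by []. Qed.
Lemma e0_w2 : e0 (w2 : JJ) = 0. Proof. by []. Qed.
Lemma e1_w2 : e1 (w2 : JJ) = 0. Proof. by []. Qed.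
Lemma e2_w2 : e2 (w2 : JJ) = 1. Proof. by []. Qed.
Lemma e3_w2 : e3 (w2 : JJ) = 0. Proof. by []. Qed.
Lemma o0_w2 : o0 (w2 : JJ) = 0. Proof. by []. Qed.
Lemma o1_w2 : o1 (w2 : JJ) = 0. Proof. by []. Qed.
Lemma o2_w2 : o2 (w2 : JJ) = 0. Proof. by []. Qed.
Lemma o3_w2 : o3 (w2 : JJ) = 0. Proof. by []. Qed.
Lemma e0_w3 : e0 (w3 : JJ) = 0. Proof. by []. Qed.
Lemma e1_w3 : e1 (w3 : JJ) = 0. Proof. by []. Qed.
Lemma e2_w3 : e2 (w3 : JJ) = 0. Proof. by []. Qed.
Lemma e3_w3 : e3 (w3 : JJ) = 1. Proof. by []. Qed.
Lemma o0_w3 : o0 (w3 : JJ) = 0. Proof. by []. Qed.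
Lemma o1_w3 : o1 (w3 : JJ) = 0. Proof. by []. Qed.
Lemma o2_w3 : o2 (w3 : JJ) = 0. Proof. by []. Qed.
Lemma o3_w3 : o3 (w3 : JJ) = 0. Proof. by []. Qed.
Lemma e0_xJ : e0 (xJ : JJ) = 0. Proof. by []. Qed.
Lemma e1_xJ : e1 (xJ : JJ) = 0. Proof. by []. Qed.
Lemma e2_xJ : e2 (xJ : JJ) = 0. Proof. by []. Qed.
Lemma e3_xJ : e3 (xJ : JJ) = 0. Proof. by []. Qed.
Lemma o0_xJ : o0 (xJ : JJ) = 1. Proof. by []. Qed.
Lemma o1_xJ : o1 (xJ : JJ) = 0. Proof. by []. Qed.
Lemma o2_xJ : o2 (xJ : JJ) = 0. Proof. by []. Qed.
Lemma o3_xJ : o3 (xJ : JJ) = 0. Proof. by []. Qed.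
Lemma e0_x1J : e0 (x1J : JJ) = 0. Proof. by []. Qed.
Lemma e1_x1J : e1 (x1J : JJ) = 0. Proof. by []. Qed.
Lemma e2_x1J : e2 (x1J : JJ) = 0. Proof. by []. Qed.
Lemma e3_x1J : e3 (x1J : JJ) = 0. Proof. by []. Qed.
Lemma o0_x1J : o0 (x1J : JJ) = 0. Proof. by []. Qed.
Lemma o1_x1J : o1 (x1J : JJ) = 1. Proof. by []. Qed.
Lemma o2_x1J : o2 (x1J : JJ) = 0. Proof. by []. Qed.
Lemma o3_x1J : o3 (x1J : JJ) = 0. Proof. by []. Qed.
Lemma e0_x2J : e0 (x2J : JJ) = 0. Proof. by []. Qed.
Lemma e1_x2J : e1 (x2J : JJ) = 0. Proof. by []. Qed.
Lemma e2_x2J : e2 (x2J : JJ) = 0. Proof. by []. Qed.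
Lemma e3_x2J : e3 (x2J : JJ) = 0. Proof. by []. Qed.
Lemma o0_x2J : o0 (x2J : JJ) = 0. Proof. by []. Qed.
Lemma o1_x2J : o1 (x2J : JJ) = 0. Proof. by []. Qed.
Lemma o2_x2J : o2 (x2J : JJ) = 1. Proof. by []. Qed.
Lemma o3_x2J : o3 (x2J : JJ) = 0. Proof. by []. Qed.
Lemma e0_x3J : e0 (x3J : JJ) = 0. Proof. by []. Qed.
Lemma e1_x3J : e1 (x3J : JJ) = 0. Proof. by []. Qed.
Lemma e2_x3J : e2 (x3J : JJ) = 0. Proof. by []. Qed.
Lemma e3_x3J : e3 (x3J : JJ) = 0. Proof. by []. Qed.
Lemma o0_x3J : o0 (x3J : JJ) = 0. Proof. by []. Qed.
Lemma o1_x3J : o1 (x3J : JJ) = 0. Proof. by []. Qed.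
Lemma o2_x3J : o2 (x3J : JJ) = 0. Proof. by []. Qed.
Lemma o3_x3J : o3 (x3J : JJ) = 1. Proof. by []. Qed.
Lemma e0_iota h : e0 (iota h) = h. Proof. by []. Qed.
Lemma e1_iota h : e1 (iota h) = 0. Proof. by []. Qed.
Lemma e2_iota h : e2 (iota h) = 0. Proof. by []. Qed.
Lemma e3_iota h : e3 (iota h) = 0. Proof. by []. Qed.
Lemma o0_iota h : o0 (iota h) = 0. Proof. by []. Qed.
Lemma o1_iota h : o1 (iota h) = 0. Proof. by []. Qed.
Lemma o2_iota h : o2 (iota h) = 0. Proof. by []. Qed.
Lemma o3_iota h : o3 (iota h) = 0. Proof. by []. Qed.
Ltac bsimp := rewrite ?e0_w1 ?e1_w1 ?e2_w1 ?e3_w1 ?o0_w1 ?o1_w1 ?o2_w1 ?o3_w1 ?e0_w2 ?e1_w2 ?e2_w2 ?e3_w2 ?o0_w2 ?o1_w2 ?o2_w2 ?o3_w2 ?e0_w3 ?e1_w3 ?e2_w3 ?e3_w3 ?o0_w3 ?o1_w3 ?o2_w3 ?o3_w3 ?e0_xJ ?e1_xJ ?e2_xJ ?e3_xJ ?o0_xJ ?o1_xJ ?o2_xJ ?o3_xJ ?e0_x1J ?e1_x1J ?e2_x1J ?e3_x1J ?o0_x1J ?o1_x1J ?o2_x1J ?o3_x1J ?e0_x2J ?e1_x2J ?e2_x2J ?e3_x2J ?o0_x2J ?o1_x2J ?o2_x2J ?o3_x2J ?e0_x3J ?e1_x3J ?e2_x3J ?e3_x3J ?o0_x3J ?o1_x3J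 ?o2_x3J ?o3_x3J ?e0_iota ?e1_iota ?e2_iota ?e3_iota ?o0_iota ?o1_iota ?o2_iota ?o3_iota.
Ltac cbc := cbn [e0 e1 e2 e3 o0 o1 o2 o3 mkJ fst snd Jmul]; bsimp.
Ltac cc := cbc; csimp; cbc; csimp; cbc; rewrite ?scE.
Ltac zcomp := cc; dpush; zring.
Ltac jcomp := csimp; apply: Jext; zcomp.

Definition GG (mu : Z -> Z) (al f1 f2 f3 : Z) (c : JJ) : JJ := mkJ
 (mu (e0 c))
 (mu (e1 c) + f2 * e3 c + f3 * e2 c)
 (mu (e2 c) - f1 * e3 c - f3 * e1 c)
 (mu (e3 c) - f1 * e2 c + f2 * e1 c)
 (mu (o0 c) + al * o0 c)
 (mu (o1 c) - al * o1 c + delta f1 * o0 c + f2 * o3 c + f3 * o2 c)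
 (mu (o2 c) - al * o2 c - f1 * o3 c + delta f2 * o0 c - f3 * o1 c)
 (mu (o3 c) - al * o3 c - f1 * o2 c + f2 * o1 c - delta f3 * o0 c).

Definition muOK (mu : Z -> Z) (al : Z) :=
  [/\ forall k u v, mu (k *: u + v) = k *: mu u + mu v,
      forall u v, mu (u * v) = mu u * v + u * mu v &
      forall u, mu (delta u) = delta (mu u) + (al + al) * delta u].

Section MuLemmas.
Variables (mu : Z -> Z) (al : Z) (Hmu : muOK mu al).
Lemma mD u v : mu (u + v) = mu u + mu v.
Proof. by case: Hmu => H _ _; rewrite -[u in LHS]scale1r H scale1r. Qed.
Lemma m0 : mu 0 = 0.
Proof. have H := mD 0 0; rewrite addr0 in H. by apply: (addrI (mu 0)); rewrite -H addr0. Qed.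
Lemma mN u : mu (- u) = - mu u.
Proof. by apply/eqP; rewrite -subr_eq0 opprK -mD addNr m0. Qed.
Lemma mZ k u : mu (k *: u) = k *: mu u.
Proof. by case: Hmu => H _ _; rewrite -[k *: u]addr0 H m0 addr0. Qed.
Lemma mM u v : mu (u * v) = mu u * v + u * mu v.
Proof. by case: Hmu. Qed.
Lemma mdel u : mu (delta u) = delta (mu u) + (al + al) * delta u.
Proof. by case: Hmu. Qed.
Lemma m1 : mu 1 = 0.
Proof. have H := mM 1 1; rewrite !mul1r !mulr1 in H. by apply: (addrI (mu 1)); rewrite -H addr0. Qed.
Lemma mcst k : mu (cst k) = 0.
Proof. by rewrite /cst mZ m1 scaler0. Qed.
End MuLemmas.

Ltac mpush H := repeat first [rewrite (mD H) | rewrite (mN H) | rewrite (mM H) | rewrite (m0 H)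
  | rewrite (m1 H) | rewrite (mcst H) | rewrite (mdel H)].

Lemma GG_leib mu al f1 f2 f3 (Hmu : muOK mu al) a b :
  GG mu al f1 f2 f3 (Jmul delta a b) =
  Jmul delta (GG mu al f1 f2 f3 a) b + Jmul delta a (GG mu al f1 f2 f3 b).
Proof.
rewrite /GG; jcoord; mpush Hmu; dpush; zring.
Qed.


Lemma GG_add mu al f1 f2 f3 (Hmu : muOK mu al) k u v :
  GG mu al f1 f2 f3 (k *: u + v) = k *: GG mu al f1 f2 f3 u + GG mu al f1 f2 f3 v.
Proof. rewrite /GG; apply: Jext; cc; mpush Hmu; dpush; zring. Qed.

Lemma J1l u : Jmul delta (iota 1) u = u. Proof. jcomp. Qed.
Lemma J1r u : Jmul delta u (iota 1) = u. Proof. jcomp. Qed.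
Lemma J0l u : Jmul delta 0 u = 0. Proof. jcomp. Qed.
Lemma J0r u : Jmul delta u 0 = 0. Proof. jcomp. Qed.
Lemma JBl u v w : Jmul delta (u - v) w = Jmul delta u w - Jmul delta v w. Proof. jcomp. Qed.
Lemma JBr u v w : Jmul delta w (u - v) = Jmul delta w u - Jmul delta w v. Proof. jcomp. Qed.
Lemma JDl u v w : Jmul delta (u + v) w = Jmul delta u w + Jmul delta v w. Proof. jcomp. Qed.
Lemma JDr u v w : Jmul delta w (u + v) = Jmul delta w u + Jmul delta w v. Proof. jcomp. Qed.
Lemma JZl k u w : Jmul delta (k *: u) w = k *: Jmul delta u w. Proof. jcomp. Qed.
Lemma JZr k u w : Jmul delta w (k *: u) = k *: Jmul delta w u. Proof. jcomp. Qed.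

Lemma isEvenE (u : JJ) : isEven u -> [/\ o0 u = 0, o1 u = 0, o2 u = 0 & o3 u = 0].
Proof. by rewrite /isEven /o0 /o1 /o2 /o3 => ->. Qed.
Lemma isOddE (u : JJ) : isOdd u -> [/\ e0 u = 0, e1 u = 0, e2 u = 0 & e3 u = 0].
Proof. by rewrite /isOdd /e0 /e1 /e2 /e3 => ->. Qed.
Lemma isEvenI (u : JJ) : o0 u = 0 -> o1 u = 0 -> o2 u = 0 -> o3 u = 0 -> isEven u.
Proof.
case: u => [[[[? ?] ?] ?] [[[? ?] ?] ?]]; rewrite /isEven /o0 /o1 /o2 /o3 /= => -> -> -> ->. done.
Qed.
Lemma isOddI (u : JJ) : e0 u = 0 -> e1 u = 0 -> e2 u = 0 -> e3 u = 0 -> isOdd u.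
Proof.
case: u => [[[[? ?] ?] ?] [[[? ?] ?] ?]]; rewrite /isOdd /e0 /e1 /e2 /e3 /= => -> -> -> ->. done.
Qed.

Lemma h2F : (2%:R : F) != 0.
Proof. apply/negP => H; move: hchar; rewrite inE /= H. done. Qed.

Lemma twoK (u : Z) : u + u = 0 -> u = 0.
Proof.
move=> H; have : (2%:R : F) *: u = 0 by rewrite scaler_nat mulr2n.
by move/eqP; rewrite scaler_eq0 (negbTE h2F) /= => /eqP.
Qed.

Lemma twoK2 (u v : Z) : u + u = v + v -> u = v.
Proof.
move=> H; apply/eqP; rewrite -subr_eq0; apply/eqP/twoK.
by rewrite addrACA -opprD H subrr.
Qed.

Lemma cancelZ (z : Z) : (forall g, delta g * z = 0) -> z = 0.
Proof.
move=> H; have [n [k [fs [gs H1]]]] := hspan 1.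
rewrite -[z]mul1r H1 mulr_suml big1 // => i _.
by rewrite -scalerAl -mulrA H mulr0 scaler0.
Qed.

Lemma w1w1 : Jmul delta w1 w1 = iota 1. Proof. jcomp. Qed.
Lemma w2w2 : Jmul delta w2 w2 = iota 1. Proof. jcomp. Qed.
Lemma w3w3 : Jmul delta w3 w3 = - iota 1. Proof. jcomp. Qed.
Lemma w1w2 : Jmul delta w1 w2 = 0. Proof. jcomp. Qed.
Lemma w1w3 : Jmul delta w1 w3 = 0. Proof. jcomp. Qed.
Lemma w2w3 : Jmul delta w2 w3 = 0. Proof. jcomp. Qed.
Lemma w1x : Jmul delta w1 xJ = 0. Proof. jcomp. Qed.
Lemma w2x : Jmul delta w2 xJ = 0. Proof. jcomp. Qed.
Lemma iota_w1 h : iota h = Jmul delta w1 (Jmul delta (iota h) w1). Proof. jcomp. Qed.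
Lemma iota_w2 h : iota h = Jmul delta w2 (Jmul delta (iota h) w2). Proof. jcomp. Qed.
Lemma gwx1 g : Jmul delta (Jmul delta (iota g) w1) xJ = Jmul delta (iota (delta g)) x1J. Proof. jcomp. Qed.
Lemma gwx2 g : Jmul delta (Jmul delta (iota g) w2) xJ = Jmul delta (iota (delta g)) x2J. Proof. jcomp. Qed.
Lemma gwx3 g : Jmul delta (Jmul delta (iota g) w3) xJ = Jmul delta (iota (delta g)) x3J. Proof. jcomp. Qed.
Lemma Jdecomp c : c = iota (e0 c) + Jmul delta (iota (e1 c)) w1 + Jmul delta (iota (e2 c)) w2
  + Jmul delta (iota (e3 c)) w3 + Jmul delta (iota (o0 c)) xJ + Jmul delta (iota (o1 c)) x1J
  + Jmul delta (iota (o2 c)) x2J + Jmul delta (iota (o3 c)) x3J.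
Proof. jcomp. Qed.

Lemma Ezero (E : JJ -> JJ)
  (Eadd : forall u v, E (u + v) = E u + E v)
  (EL : forall a b, E (Jmul delta a b) = Jmul delta (E a) b + Jmul delta a (E b))
  (Eev : forall u, isEven u -> isEven (E u))
  (Eod : forall u, isOdd u -> isOdd (E u))
  (P0 : forall h, e0 (E (iota h)) = 0) (P1 : o0 (E xJ) = 0)
  (P2 : e2 (E w1) = 0) (P3 : e3 (E w1) = 0) (P4 : e3 (E w2) = 0) :
  forall c, E c = 0.
Proof.
have E0 : E 0 = 0.
  by have := Eadd 0 0; rewrite addr0 => H; apply: (addrI (E 0)); rewrite -H addr0.
have EN u : E (- u) = - E u.
  by apply/eqP; rewrite -subr_eq0 opprK -Eadd addNr E0.
have E1 : E (iota 1) = 0.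
  have := EL (iota 1) (iota 1); rewrite !J1r !J1l => H.
  by apply: (addrI (E (iota 1))); rewrite -H addr0.
have Ew1 : E w1 = 0.
  have H := EL w1 w1; rewrite w1w1 E1 in H.
  have [o0w o1w o2w o3w] := isEvenE (Eev w1 erefl).
  have a0 : e1 (E w1) + e1 (E w1) = e0 (Jmul delta (E w1) w1 + Jmul delta w1 (E w1)) by zcomp.
  have a1 : e0 (E w1) + e0 (E w1) = e1 (Jmul delta (E w1) w1 + Jmul delta w1 (E w1)) by zcomp.
  rewrite -H e00 in a0; rewrite -H e10 in a1.
  move/twoK: a0 => a0; move/twoK: a1 => a1.
  by apply: Jext; rewrite ?e00 ?e10 ?e20 ?e30 ?o00 ?o10 ?o20 ?o30.
have Ew2 : E w2 = 0.
  have H := EL w2 w2; rewrite w2w2 E1 in H.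
  have H' := EL w1 w2; rewrite w1w2 E0 Ew1 J0l add0r in H'.
  have [o0w o1w o2w o3w] := isEvenE (Eev w2 erefl).
  have a0 : e2 (E w2) + e2 (E w2) = e0 (Jmul delta (E w2) w2 + Jmul delta w2 (E w2)) by zcomp.
  have a1 : e0 (E w2) + e0 (E w2) = e2 (Jmul delta (E w2) w2 + Jmul delta w2 (E w2)) by zcomp.
  have a2 : e1 (E w2) = e0 (Jmul delta w1 (E w2)) by zcomp.
  rewrite -H e00 in a0; rewrite -H e20 in a1; rewrite -H' e00 in a2.
  move/twoK: a0 => a0; move/twoK: a1 => a1.
  by apply: Jext; rewrite ?e00 ?e10 ?e20 ?e30 ?o00 ?o10 ?o20 ?o30.
have Ew3 : E w3 = 0.
  have H := EL w3 w3; rewrite w3w3 EN E1 oppr0 in H.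
  have H' := EL w1 w3; rewrite w1w3 E0 Ew1 J0l add0r in H'.
  have H'' := EL w2 w3; rewrite w2w3 E0 Ew2 J0l add0r in H''.
  have [o0w o1w o2w o3w] := isEvenE (Eev w3 erefl).
  have a0 : e3 (E w3) + e3 (E w3) = - e0 (Jmul delta (E w3) w3 + Jmul delta w3 (E w3)) by zcomp.
  have a1 : e0 (E w3) + e0 (E w3) = e3 (Jmul delta (E w3) w3 + Jmul delta w3 (E w3)) by zcomp.
  have a2 : e1 (E w3) = e0 (Jmul delta w1 (E w3)) by zcomp.
  have a3 : e2 (E w3) = e0 (Jmul delta w2 (E w3)) by zcomp.
  rewrite -H e00 oppr0 in a0; rewrite -H e30 in a1; rewrite -H' e00 in a2; rewrite -H'' e00 in a3.
  move/twoK: a0 => a0; move/twoK: a1 => a1.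
  by apply: Jext; rewrite ?e00 ?e10 ?e20 ?e30 ?o00 ?o10 ?o20 ?o30.
have Eiota h : E (iota h) = 0.
  have H := EL w1 (Jmul delta (iota h) w1).
  rewrite -iota_w1 Ew1 J0l add0r EL Ew1 J0r addr0 in H.
  have H' := EL w2 (Jmul delta (iota h) w2).
  rewrite -iota_w2 Ew2 J0l add0r EL Ew2 J0r addr0 in H'.
  have [o0w o1w o2w o3w] := isEvenE (Eev (iota h) erefl).
  have a2 : e2 (Jmul delta w1 (Jmul delta (E (iota h)) w1)) = 0 by zcomp.
  have a3 : e3 (Jmul delta w1 (Jmul delta (E (iota h)) w1)) = 0 by zcomp.
  have a1 : e1 (Jmul delta w2 (Jmul delta (E (iota h)) w2)) = 0 by zcomp.
  rewrite -H in a2 a3; rewrite -H' in a1.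
  by apply: Jext; rewrite ?e00 ?e10 ?e20 ?e30 ?o00 ?o10 ?o20 ?o30.
have Ex : E xJ = 0.
  have H1 := EL w1 xJ; rewrite w1x E0 Ew1 J0l add0r in H1.
  have H2 := EL w2 xJ; rewrite w2x E0 Ew2 J0l add0r in H2.
  have [e0x e1x e2x e3x] := isOddE (Eod xJ erefl).
  have b3 : o3 (E xJ) = - o2 (Jmul delta w1 (E xJ)) by cc; rewrite ?e0x ?e1x ?e2x ?e3x; dpush; zring.
  have b2 : o2 (E xJ) = - o3 (Jmul delta w1 (E xJ)) by cc; rewrite ?e0x ?e1x ?e2x ?e3x; dpush; zring.
  have b1 : o1 (E xJ) = o3 (Jmul delta w2 (E xJ)) by cc; rewrite ?e0x ?e1x ?e2x ?e3x; dpush; zring.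
  rewrite -H1 o20 oppr0 in b3; rewrite -H1 o30 oppr0 in b2; rewrite -H2 o30 in b1.
  by apply: Jext; rewrite ?e00 ?e10 ?e20 ?e30 ?o00 ?o10 ?o20 ?o30.
have icancel (v : JJ) : (forall g, Jmul delta (iota (delta g)) v = 0) -> v = 0.
  move=> H; apply: Jext; apply: cancelZ => g.
  - by transitivity (e0 (Jmul delta (iota (delta g)) v)); [zcomp | rewrite H].
  - by transitivity (e1 (Jmul delta (iota (delta g)) v)); [zcomp | rewrite H].
  - by transitivity (e2 (Jmul delta (iota (delta g)) v)); [zcomp | rewrite H].
  - by transitivity (e3 (Jmul delta (iota (delta g)) v)); [zcomp | rewrite H].
  - by transitivity (o0 (Jmul delta (iota (delta g)) v)); [zcomp | rewrite H].
  - by transitivity (o1 (Jmul delta (iota (delta g)) v)); [zcomp | rewrite H].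
  - by transitivity (o2 (Jmul delta (iota (delta g)) v)); [zcomp | rewrite H].
  - by transitivity (o3 (Jmul delta (iota (delta g)) v)); [zcomp | rewrite H].
have Ex1 : E x1J = 0.
  apply: icancel => g; have H := EL (Jmul delta (iota g) w1) xJ.
  by rewrite gwx1 !EL !Eiota Ew1 Ex in H; do 3 rewrite ?J0l ?J0r ?add0r ?addr0 in H.
have Ex2 : E x2J = 0.
  apply: icancel => g; have H := EL (Jmul delta (iota g) w2) xJ.
  by rewrite gwx2 !EL !Eiota Ew2 Ex in H; do 3 rewrite ?J0l ?J0r ?add0r ?addr0 in H.
have Ex3 : E x3J = 0.
  apply: icancel => g; have H := EL (Jmul delta (iota g) w3) xJ.
  by rewrite gwx3 !EL !Eiota Ew3 Ex in H; do 3 rewrite ?J0l ?J0r ?add0r ?addr0 in H.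
move=> c; rewrite (Jdecomp c) !Eadd !EL !Eiota Ew1 Ew2 Ew3 Ex Ex1 Ex2 Ex3.
by do 3 rewrite ?J0l ?J0r ?add0r ?addr0.
Qed.


Lemma iotaL k u v : iota (k *: u + v) = k *: iota u + iota v. Proof. jcomp. Qed.
Lemma iotaM u v : iota (u * v) = Jmul delta (iota u) (iota v). Proof. jcomp. Qed.
Lemma iota0 : iota 0 = 0. Proof. jcomp. Qed.
Lemma xgx u : Jmul delta xJ (Jmul delta (iota u) xJ) = - iota (delta u). Proof. jcomp. Qed.

Lemma GEN (d : JJ -> JJ) : DerJ0 delta d ->
  exists mu al f1 f2 f3, muOK mu al /\ forall c, d c = GG mu al f1 f2 f3 c.
Proof.
case=> Hlin [[Hev Hod] Hl].
have dadd u v : d (u + v) = d u + d v by have := Hlin 1 u v; rewrite !scale1r.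
have dZ0 : d 0 = 0.
  by have := dadd 0 0; rewrite addr0 => H; apply: (addrI (d 0)); rewrite -H addr0.
have dN u : d (- u) = - d u.
  by apply/eqP; rewrite -subr_eq0 opprK -dadd addNr dZ0.
have Hmu : muOK (fun h => e0 (d (iota h))) (o0 (d xJ)).
  split.
  - by move=> k u v; rewrite iotaL Hlin e0D e0Z scE.
  - by move=> u v; rewrite iotaM Hl; zcomp.
  - move=> u; rewrite -[e0 (d (iota (delta u)))]opprK -e0N -dN -xgx Hl Hl; zcomp.
exists (fun h => e0 (d (iota h))), (o0 (d xJ)), (-(e3 (d w2))), (e3 (d w1)), (-(e2 (d w1))).
split => //.
set G := GG _ _ _ _ _.
have Gadd u v : G (u + v) = G u + G v.
  by have H := GG_add (-(e3 (d w2))) (e3 (d w1)) (-(e2 (d w1))) Hmu 1 u v; rewrite !scale1r in H; exact: H.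
have HGl := GG_leib (-(e3 (d w2))) (e3 (d w1)) (-(e2 (d w1))) Hmu.
have m0 : e0 (d (iota 0)) = 0 by rewrite iota0 dZ0.
have m1 : e0 (d (iota 1)) = 0.
  have := Hl (iota 1) (iota 1); rewrite !J1r !J1l => H.
  have : d (iota 1) = 0 by apply: (addrI (d (iota 1))); rewrite -H addr0.
  by move=> ->.
suff H : forall c, d c - G c = 0 by move=> c; apply/eqP; rewrite -subr_eq0; apply/eqP.
apply: Ezero.
- by move=> u v; rewrite dadd Gadd opprD addrACA.
- by move=> a b; rewrite Hl /G HGl JBl JBr opprD addrACA.
- move=> u Hu; have [u0 u1 u2 u3] := isEvenE Hu; have [v0 v1 v2 v3] := isEvenE (Hev u Hu).
  by apply: isEvenI; rewrite /G /GG; cc; rewrite ?u0 ?u1 ?u2 ?u3 ?v0 ?v1 ?v2 ?v3 ?m0; dpush; zring.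
- move=> u Hu; have [u0 u1 u2 u3] := isOddE Hu; have [v0 v1 v2 v3] := isOddE (Hod u Hu).
  by apply: isOddI; rewrite /G /GG; cc; rewrite ?u0 ?u1 ?u2 ?u3 ?v0 ?v1 ?v2 ?v3 ?m0; dpush; zring.
- by move=> h; rewrite /G /GG; cc; zring.
- by rewrite /G /GG; cc; rewrite ?m0 ?m1; dpush; zring.
- by rewrite /G /GG; cc; rewrite ?m0 ?m1; dpush; zring.
- by rewrite /G /GG; cc; rewrite ?m0 ?m1; dpush; zring.
- by rewrite /G /GG; cc; rewrite ?m0 ?m1; dpush; zring.
Qed.

Lemma GG_der mu al f1 f2 f3 : muOK mu al -> DerJ0 delta (GG mu al f1 f2 f3).
Proof.
move=> Hmu; split; first by move=> k u v; exact: GG_add.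
split; last by move=> a b; exact: GG_leib.
split=> u Hu.
- have [u0 u1 u2 u3] := isEvenE Hu.
  by apply: isEvenI; rewrite /GG; cc; rewrite ?u0 ?u1 ?u2 ?u3 (m0 Hmu); zring.
- have [u0 u1 u2 u3] := isOddE Hu.
  by apply: isOddI; rewrite /GG; cc; rewrite ?u0 ?u1 ?u2 ?u3 (m0 Hmu); zring.
Qed.

Definition Gq (p : JJ) : JJ -> JJ :=
  GG (fun u => -(e0 p * delta u + e0 p * delta u)) (delta (e0 p)) (e1 p) (e2 p) (e3 p).

Lemma Gq_muOK p : muOK (fun u => -(e0 p * delta u + e0 p * delta u)) (delta (e0 p)).
Proof.
split.
- by move=> k u v; rewrite !scE; dpush; zring.
- by move=> u v; dpush; zring.
- by move=> u; dpush; zring.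
Qed.

Lemma Gq_der p : DerJ0 delta (Gq p).
Proof. exact: GG_der (Gq_muOK p). Qed.

Lemma GqL k p q c : Gq (k *: p + q) c = k *: Gq p c + Gq q c.
Proof. by rewrite /Gq /GG; apply: Jext; cc; dpush; zring. Qed.

Lemma lin_sum (V W : lmodType F) (L : V -> W)
  (HL : forall k u v, L (k *: u + v) = k *: L u + L v) n (k : 'I_n -> F) (u : 'I_n -> V) :
  L (\sum_(i < n) k i *: u i) = \sum_(i < n) k i *: L (u i).
Proof.
have L0 : L 0 = 0.
  have := HL 1 0 0; rewrite scaler0 addr0 scale1r => H.
  by apply: (addrI (L 0)); rewrite -H addr0.
by elim/big_rec2: _ => // i y1 y2 _ <-; rewrite HL.
Qed.

Lemma Gq_sum n (k : 'I_n -> F) (p : 'I_n -> JJ) c :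
  \sum_(i < n) k i *: Gq (p i) c = Gq (\sum_(i < n) k i *: p i) c.
Proof. by rewrite (lin_sum (L := fun p => Gq p c)) // => ? ? ?; exact: GqL. Qed.

Lemma Dop_ff a b c : Dop delta false false a b c = Jmul delta a (Jmul delta b c) - Jmul delta b (Jmul delta a c).
Proof. by rewrite /Dop /= expr0 scale1r. Qed.
Lemma Dop_tt a b c : Dop delta true true a b c = Jmul delta a (Jmul delta b c) + Jmul delta b (Jmul delta a c).
Proof. by rewrite /Dop /= expr1 scaleN1r opprK. Qed.

Definition parEE (a b : JJ) : JJ := mkJ 0 (e2 a * e3 b - e3 a * e2 b) (e3 a * e1 b - e1 a * e3 b)
  (e1 a * e2 b - e2 a * e1 b) 0 0 0 0.
Definition parOO (a b : JJ) : JJ := mkJ (o0 a * o0 b) (o0 a * o1 b + o1 a * o0 b)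
  (o0 a * o2 b + o2 a * o0 b) (-(o0 a * o3 b + o3 a * o0 b)) 0 0 0 0.

Lemma DopEE a b c : isEven a -> isEven b -> Dop delta false false a b c = Gq (parEE a b) c.
Proof.
move=> /isEvenE [a4 a5 a6 a7] /isEvenE [b4 b5 b6 b7].
rewrite Dop_ff /Gq /GG /parEE; apply: Jext; cc.
all: rewrite ?a4 ?a5 ?a6 ?a7 ?b4 ?b5 ?b6 ?b7; dpush; zring.
Qed.

Lemma DopOO a b c : isOdd a -> isOdd b -> Dop delta true true a b c = Gq (parOO a b) c.
Proof.
move=> /isOddE [a4 a5 a6 a7] /isOddE [b4 b5 b6 b7].
rewrite Dop_tt /Gq /GG /parOO; apply: Jext; cc.
all: rewrite ?a4 ?a5 ?a6 ?a7 ?b4 ?b5 ?b6 ?b7; dpush; zring.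
Qed.

Lemma homogJmul p q (u v : JJ) : homog p u -> homog q v -> homog (addb p q) (Jmul delta u v).
Proof.
case: p; case: q => /= Hu Hv.
- have [u0 u1 u2 u3] := isOddE Hu; have [v0 v1 v2 v3] := isOddE Hv.
  by apply: isEvenI; cc; rewrite ?u0 ?u1 ?u2 ?u3 ?v0 ?v1 ?v2 ?v3; dpush; zring.
- have [u0 u1 u2 u3] := isOddE Hu; have [v0 v1 v2 v3] := isEvenE Hv.
  by apply: isOddI; cc; rewrite ?u0 ?u1 ?u2 ?u3 ?v0 ?v1 ?v2 ?v3; dpush; zring.
- have [u0 u1 u2 u3] := isEvenE Hu; have [v0 v1 v2 v3] := isOddE Hv.
  by apply: isOddI; cc; rewrite ?u0 ?u1 ?u2 ?u3 ?v0 ?v1 ?v2 ?v3; dpush; zring.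
- have [u0 u1 u2 u3] := isEvenE Hu; have [v0 v1 v2 v3] := isEvenE Hv.
  by apply: isEvenI; cc; rewrite ?u0 ?u1 ?u2 ?u3 ?v0 ?v1 ?v2 ?v3; dpush; zring.
Qed.

Lemma homogB p (u v : JJ) : homog p u -> homog p v -> homog p (u - v).
Proof.
case: p => /= Hu Hv.
- have [u0 u1 u2 u3] := isOddE Hu; have [v0 v1 v2 v3] := isOddE Hv.
  by apply: isOddI; csimp; rewrite ?u0 ?u1 ?u2 ?u3 ?v0 ?v1 ?v2 ?v3 subrr.
- have [u0 u1 u2 u3] := isEvenE Hu; have [v0 v1 v2 v3] := isEvenE Hv.
  by apply: isEvenI; csimp; rewrite ?u0 ?u1 ?u2 ?u3 ?v0 ?v1 ?v2 ?v3 subrr.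
Qed.

Lemma homogZ p k (u : JJ) : homog p u -> homog p (k *: u).
Proof.
case: p => /= Hu.
- have [u0 u1 u2 u3] := isOddE Hu.
  by apply: isOddI; csimp; rewrite ?u0 ?u1 ?u2 ?u3 mulr0.
- have [u0 u1 u2 u3] := isEvenE Hu.
  by apply: isEvenI; csimp; rewrite ?u0 ?u1 ?u2 ?u3 mulr0.
Qed.

Lemma homogDop pa pb q a b c : homog pa a -> homog pb b -> homog q c ->
  homog (addb pa (addb pb q)) (Dop delta pa pb a b c).
Proof.
move=> Ha Hb Hc; rewrite /Dop; apply: homogB.
- by apply: homogJmul => //; apply: homogJmul.
- by apply: homogZ; rewrite addbCA; apply: homogJmul => //; apply: homogJmul.
Qed.

Definition pe (u : JJ) : JJ := mkJ (e0 u) (e1 u) (e2 u) (e3 u) 0 0 0 0.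
Definition po (u : JJ) : JJ := mkJ 0 0 0 0 (o0 u) (o1 u) (o2 u) (o3 u).

Lemma pe_po u : pe u + po u = u. Proof. rewrite /pe /po; jcomp. Qed.
Lemma pe_lin k u v : pe (k *: u + v) = k *: pe u + pe v. Proof. rewrite /pe; jcomp. Qed.
Lemma po_lin k u v : po (k *: u + v) = k *: po u + po v. Proof. rewrite /po; jcomp. Qed.
Lemma pe_homog u : homog false (pe u). Proof. exact: isEvenI. Qed.
Lemma po_homog u : homog true (po u). Proof. exact: isOddI. Qed.
Lemma pe_even u : isEven u -> pe u = u.
Proof. move=> /isEvenE [u0 u1 u2 u3]; apply: Jext; rewrite /pe; cc; by rewrite ?u0 ?u1 ?u2 ?u3. Qed.
Lemma po_odd u : isOdd u -> po u = u.
Proof. move=> /isOddE [u0 u1 u2 u3]; apply: Jext; rewrite /po; cc; by rewrite ?u0 ?u1 ?u2 ?u3. Qed.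
Lemma pe_odd u : isOdd u -> pe u = 0.
Proof. move=> /isOddE [u0 u1 u2 u3]; apply: Jext; rewrite /pe; cc; by rewrite ?u0 ?u1 ?u2 ?u3. Qed.
Lemma po_even u : isEven u -> po u = 0.
Proof. move=> /isEvenE [u0 u1 u2 u3]; apply: Jext; rewrite /po; cc; by rewrite ?u0 ?u1 ?u2 ?u3. Qed.

Lemma Gq_split p c : pe (Gq p (pe c)) + po (Gq p (po c)) = Gq p c.
Proof. rewrite /pe /po /Gq /GG; jcomp. Qed.

Lemma Gq0 c : Gq 0 c = 0.
Proof. rewrite /Gq /GG; jcomp. Qed.

Lemma Dop_add pa pb a b u v : Dop delta pa pb a b (u + v) = Dop delta pa pb a b u + Dop delta pa pb a b v.
Proof. by rewrite /Dop !JDr scalerDr opprD addrACA. Qed.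

Definition par (pa pb : bool) (a b : JJ) : JJ :=
  if pa then (if pb then parOO a b else 0) else (if pb then 0 else parEE a b).

Lemma par_split pa pb a b c : homog pa a -> homog pb b ->
  pe (Dop delta pa pb a b (pe c)) + po (Dop delta pa pb a b (po c)) = Gq (par pa pb a b) c.
Proof.
move=> Ha Hb.
have He := homogDop Ha Hb (pe_homog c); have Ho := homogDop Ha Hb (po_homog c).
move: Ha Hb He Ho; rewrite /par; case: pa; case: pb => /= Ha Hb He Ho.
- by rewrite !DopOO // Gq_split.
- by rewrite pe_odd // po_even // addr0 Gq0.
- by rewrite pe_odd // po_even // addr0 Gq0.
- by rewrite !DopEE // Gq_split.
Qed.

Lemma InderDecomp n (k : 'I_n -> F) (pa pb : 'I_n -> bool) (xs ys : 'I_n -> JJ) :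
  (forall i, homog (pa i) (xs i) /\ homog (pb i) (ys i)) ->
  exists P, forall c,
    pe (\sum_(i < n) k i *: Dop delta (pa i) (pb i) (xs i) (ys i) (pe c)) +
    po (\sum_(i < n) k i *: Dop delta (pa i) (pb i) (xs i) (ys i) (po c)) = Gq P c.
Proof.
move=> Hh; exists (\sum_(i < n) k i *: par (pa i) (pb i) (xs i) (ys i)) => c.
rewrite (lin_sum pe_lin) (lin_sum po_lin) -big_split -Gq_sum /=.
apply: eq_bigr => i _; rewrite -scalerDr; congr (_ *: _).
by case: (Hh i) => Ha Hb; exact: par_split.
Qed.

Lemma InderJ_even d : InderJ delta d -> evenMapJ d -> exists P, forall c, d c = Gq P c.
Proof.
move=> [n [k [pa [pb [xs [ys [Hh Hd]]]]]]] [Hev Hod].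
have [P HP] := InderDecomp k Hh; exists P => c.
have dadd u v : d (u + v) = d u + d v.
  by rewrite !Hd -big_split /=; apply: eq_bigr => i _; rewrite Dop_add scalerDr.
rewrite -{1}(pe_po c) dadd -{1}(pe_even (Hev _ (pe_homog c))) -{1}(po_odd (Hod _ (po_homog c))).
by rewrite !Hd HP.
Qed.

Lemma inGr_get al (a : JJ) : inGr al a ->
  [/\ ((false,false) <> al -> e0 a = 0 /\ o0 a = 0), ((true,false) <> al -> e1 a = 0 /\ o1 a = 0),
      ((false,true) <> al -> e2 a = 0 /\ o2 a = 0) & ((true,true) <> al -> e3 a = 0 /\ o3 a = 0)].
Proof.
move=> H; split.
- exact: (H (@Ordinal 4 0 erefl)).
- exact: (H (@Ordinal 4 1 erefl)).
- exact: (H (@Ordinal 4 2 erefl)).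
- exact: (H (@Ordinal 4 3 erefl)).
Qed.

Lemma inGr_mk al (a : JJ) :
  [/\ ((false,false) <> al -> e0 a = 0 /\ o0 a = 0), ((true,false) <> al -> e1 a = 0 /\ o1 a = 0),
      ((false,true) <> al -> e2 a = 0 /\ o2 a = 0) & ((true,true) <> al -> e3 a = 0 /\ o3 a = 0)] ->
  inGr al a.
Proof.
by move=> [H0 H1 H2 H3] [[|[|[|[|n]]]] Hi] //=.
Qed.

Ltac spec H := try (let X := fresh in let Y := fresh in
  have [X Y] := H ltac:(discriminate); rewrite ?X ?Y; clear X Y).
Ltac gradtac H0 H1 H2 H3 :=
  spec H0; spec H1; spec H2; spec H3;
  split; (let Hne := fresh "Hne" in move=> Hne; try (by exfalso; exact: (Hne erefl))).

Lemma GG_grad00 mu al f1 f2 f3 : mu 0 = 0 -> f1 = 0 -> f2 = 0 -> f3 = 0 ->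
  gradMapJ (false,false) (GG mu al f1 f2 f3).
Proof.
move=> Hm -> -> -> [[] []] a /inGr_get [H0 H1 H2 H3]; apply: inGr_mk;
rewrite /GG; cbc; cbn [addGr addb fst snd]; gradtac H0 H1 H2 H3; split; rewrite ?Hm; dpush; zring.
Qed.

Lemma GG_grad10 mu al f1 f2 f3 : (forall u, mu u = 0) -> al = 0 -> f2 = 0 -> f3 = 0 ->
  gradMapJ (true,false) (GG mu al f1 f2 f3).
Proof.
move=> Hm -> -> -> [[] []] a /inGr_get [H0 H1 H2 H3]; apply: inGr_mk;
rewrite /GG; cbc; rewrite !Hm; cbn [addGr addb fst snd]; gradtac H0 H1 H2 H3; split; dpush; zring.
Qed.

Lemma GG_grad01 mu al f1 f2 f3 : (forall u, mu u = 0) -> al = 0 -> f1 = 0 -> f3 = 0 ->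
  gradMapJ (false,true) (GG mu al f1 f2 f3).
Proof.
move=> Hm -> -> -> [[] []] a /inGr_get [H0 H1 H2 H3]; apply: inGr_mk;
rewrite /GG; cbc; rewrite !Hm; cbn [addGr addb fst snd]; gradtac H0 H1 H2 H3; split; dpush; zring.
Qed.

Lemma GG_grad11 mu al f1 f2 f3 : (forall u, mu u = 0) -> al = 0 -> f1 = 0 -> f2 = 0 ->
  gradMapJ (true,true) (GG mu al f1 f2 f3).
Proof.
move=> Hm -> -> -> [[] []] a /inGr_get [H0 H1 H2 H3]; apply: inGr_mk;
rewrite /GG; cbc; rewrite !Hm; cbn [addGr addb fst snd]; gradtac H0 H1 H2 H3; split; dpush; zring.
Qed.

Notation KK := (@K F Z).

Lemma Kext (k l : KK) : k.1 = l.1 -> k.2 = l.2 -> k = l.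
Proof. by case: k => ? ?; case: l => ? ? /= -> ->. Qed.

Lemma KmulE (k l : KK) : Kmul delta k l =
  (k.1 * l.1 + (delta k.2 * l.2 - k.2 * delta l.2), k.1 * l.2 + l.1 * k.2).
Proof.
apply: Kext; rewrite /Kmul /pK /iK; cbn [fst snd]; cc; zring.
Qed.

Lemma tildeE (dK : KK -> KK) mu al :
  (forall u v, dK (u, v) = (mu u, mu v + al * v)) -> mu 1 = 0 -> mu 0 = 0 ->
  forall c, tildeJ dK c = GG mu al 0 0 0 c.
Proof.
move=> H m1 m0 c; rewrite /tildeJ !H /= m1 add0r mulr1 /iK /GG; apply: Jext; cc; rewrite ?m0; dpush; zring.
Qed.

Definition gxJ (g : Z) : JJ := mkJ 0 0 0 0 g 0 0 0.

Lemma Gq_ext p q : e0 p = e0 q -> e1 p = e1 q -> e2 p = e2 q -> e3 p = e3 q -> Gq p = Gq q.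
Proof. by rewrite /Gq => -> -> -> ->. Qed.

Lemma Dop_xgx g c : Dop delta true true xJ (gxJ g) c = Gq (iota g) c.
Proof.
rewrite DopOO //; congr (Gq _ c); apply: Jext; rewrite /parOO /gxJ; cc; zring.
Qed.

Lemma Dspan1 A B pA pB a b (d : JJ -> JJ) : A a -> B b ->
  (forall c, d c = Dop delta pA pB a b c) -> Dspan delta A B pA pB d.
Proof.
move=> Ha Hb Hd; exists 1%N, (fun _ => 1), (fun _ => a), (fun _ => b); split => // c.
by rewrite big_ord1 scale1r.
Qed.

Lemma Dspan_InderJ A B pA pB (d : JJ -> JJ) : Dspan delta A B pA pB d ->
  (forall x, A x -> homog pA x) -> (forall y, B y -> homog pB y) -> InderJ delta d.
Proof.
move=> [n [k [xs [ys [Hxy Hd]]]]] HA HB.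
exists n, k, (fun _ => pA), (fun _ => pB), xs, ys; split => // i.
by case: (Hxy i) => Ha Hb; split; [apply: HA | apply: HB].
Qed.

Lemma mu0OK : muOK (fun _ => 0) 0.
Proof. split => * /=; rewrite ?scE ?d0; zring. Qed.

Lemma iota_gr h : inGr (false,false) (iota h).
Proof. apply: inGr_mk; split => H; cc; split => //; by exfalso; apply: H. Qed.
Lemma xJ_gr : inGr (false,false) (xJ : JJ).
Proof. apply: inGr_mk; split => H; cc; split => //; by exfalso; apply: H. Qed.
Lemma w1_gr : inGr (true,false) (w1 : JJ).
Proof. apply: inGr_mk; split => H; cc; split => //; by exfalso; apply: H. Qed.
Lemma w2_gr : inGr (false,true) (w2 : JJ).
Proof. apply: inGr_mk; split => H; cc; split => //; by exfalso; apply: H. Qed.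
Lemma w3_gr : inGr (true,true) (w3 : JJ).
Proof. apply: inGr_mk; split => H; cc; split => //; by exfalso; apply: H. Qed.

Ltac nd := cbn; discriminate.

Lemma Gr00 d : DerJ0g delta (false,false) d ->
  exists mu al, muOK mu al /\ forall c, d c = GG mu al 0 0 0 c.
Proof.
move=> [Hd Hgr]; have [mu [al [f1 [f2 [f3 [Hmu HG]]]]]] := GEN Hd.
have [_ _ A2 A3] := inGr_get (Hgr _ _ w1_gr).
have [_ _ _ B3] := inGr_get (Hgr _ _ w2_gr).
have [a2 _] := A2 ltac:(nd); have [a3 _] := A3 ltac:(nd); have [b3 _] := B3 ltac:(nd).
rewrite HG in a2; rewrite HG in a3; rewrite HG in b3.
have f3z : f3 = 0.
  have : f3 = - e2 (GG mu al f1 f2 f3 w1) by rewrite /GG; cc; rewrite (m0 Hmu); zring.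
  by rewrite a2 oppr0.
have f2z : f2 = 0.
  have : f2 = e3 (GG mu al f1 f2 f3 w1) by rewrite /GG; cc; rewrite (m0 Hmu); zring.
  by rewrite a3.
have f1z : f1 = 0.
  have : f1 = - e3 (GG mu al f1 f2 f3 w2) by rewrite /GG; cc; rewrite (m0 Hmu); zring.
  by rewrite b3 oppr0.
by exists mu, al; split => // c; rewrite HG f1z f2z f3z.
Qed.

Lemma Gr_zero al d mu al' f1 f2 f3 : gradMapJ al d -> al <> (false,false) -> muOK mu al' ->
  (forall c, d c = GG mu al' f1 f2 f3 c) -> (forall u, mu u = 0) /\ al' = 0.
Proof.
move=> Hgr Hne Hmu HG.
have Hm : forall u, mu u = 0.
  move=> u; have [A0 _ _ _] := inGr_get (Hgr _ _ (iota_gr u)).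
  have [a0 _] : e0 (d (iota u)) = 0 /\ o0 (d (iota u)) = 0.
    by apply: A0; case: al Hne {Hgr HG} => [[] []] //=.
  have : mu u = e0 (GG mu al' f1 f2 f3 (iota u)) by rewrite /GG; cc.
  by rewrite -HG a0.
split => //.
have [A0 _ _ _] := inGr_get (Hgr _ _ xJ_gr).
have [_ a0] : e0 (d xJ) = 0 /\ o0 (d xJ) = 0.
  by apply: A0; case: al Hne {Hgr HG} => [[] []] //=.
have : al' = o0 (GG mu al' f1 f2 f3 xJ) by rewrite /GG; cc; rewrite Hm; zring.
by rewrite -HG a0.
Qed.

Lemma Gr10 d : DerJ0g delta (true,false) d -> exists f, forall c, d c = GG (fun _ => 0) 0 f 0 0 c.
Proof.
move=> [Hd Hgr]; have [mu [al [f1 [f2 [f3 [Hmu HG]]]]]] := GEN Hd.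
have [Hm alz] := Gr_zero Hgr ltac:(discriminate) Hmu HG.
have [_ _ A2 A3] := inGr_get (Hgr _ _ w1_gr).
have [a2 _] := A2 ltac:(nd); have [a3 _] := A3 ltac:(nd).
rewrite HG in a2; rewrite HG in a3.
have f3z : f3 = 0.
  have : f3 = - e2 (GG mu al f1 f2 f3 w1) by rewrite /GG; cc; rewrite Hm; zring.
  by rewrite a2 oppr0.
have f2z : f2 = 0.
  have : f2 = e3 (GG mu al f1 f2 f3 w1) by rewrite /GG; cc; rewrite Hm; zring.
  by rewrite a3.
exists f1 => c; rewrite HG /GG; apply: Jext; cc; rewrite ?Hm ?f2z ?f3z ?alz; dpush; zring.
Qed.

Lemma Gr01 d : DerJ0g delta (false,true) d -> exists f, forall c, d c = GG (fun _ => 0) 0 0 f 0 c.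
Proof.
move=> [Hd Hgr]; have [mu [al [f1 [f2 [f3 [Hmu HG]]]]]] := GEN Hd.
have [Hm alz] := Gr_zero Hgr ltac:(discriminate) Hmu HG.
have [_ _ A2 _] := inGr_get (Hgr _ _ w1_gr).
have [_ _ _ B3] := inGr_get (Hgr _ _ w2_gr).
have [a2 _] := A2 ltac:(nd); have [b3 _] := B3 ltac:(nd).
rewrite HG in a2; rewrite HG in b3.
have f3z : f3 = 0.
  have : f3 = - e2 (GG mu al f1 f2 f3 w1) by rewrite /GG; cc; rewrite Hm; zring.
  by rewrite a2 oppr0.
have f1z : f1 = 0.
  have : f1 = - e3 (GG mu al f1 f2 f3 w2) by rewrite /GG; cc; rewrite Hm; zring.
  by rewrite b3 oppr0.
exists f2 => c; rewrite HG /GG; apply: Jext; cc; rewrite ?Hm ?f1z ?f3z ?alz; dpush; zring.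
Qed.

Lemma Gr11 d : DerJ0g delta (true,true) d -> exists f, forall c, d c = GG (fun _ => 0) 0 0 0 f c.
Proof.
move=> [Hd Hgr]; have [mu [al [f1 [f2 [f3 [Hmu HG]]]]]] := GEN Hd.
have [Hm alz] := Gr_zero Hgr ltac:(discriminate) Hmu HG.
have [_ _ _ A3] := inGr_get (Hgr _ _ w1_gr).
have [_ _ _ B3] := inGr_get (Hgr _ _ w2_gr).
have [a3 _] := A3 ltac:(nd); have [b3 _] := B3 ltac:(nd).
rewrite HG in a3; rewrite HG in b3.
have f2z : f2 = 0.
  have : f2 = e3 (GG mu al f1 f2 f3 w1) by rewrite /GG; cc; rewrite Hm; zring.
  by rewrite a3.
have f1z : f1 = 0.
  have : f1 = - e3 (GG mu al f1 f2 f3 w2) by rewrite /GG; cc; rewrite Hm; zring.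
  by rewrite b3 oppr0.
exists f3 => c; rewrite HG /GG; apply: Jext; cc; rewrite ?Hm ?f1z ?f2z ?alz; dpush; zring.
Qed.

Lemma checkK_der mu al : muOK mu al -> DerK0 delta (checkK mu al).
Proof.
move=> Hmu; split.
  move=> c u v; apply: Kext; rewrite /checkK /=; rewrite ?scE; mpush Hmu; zring.
split.
  split=> k; rewrite /isEvenK /isOddK /checkK /= => ->; rewrite (m0 Hmu); zring.
move=> k l; rewrite !KmulE; apply: Kext; rewrite /checkK /=; mpush Hmu; dpush; zring.
Qed.

Lemma DerK_char dK : DerK0 delta dK ->
  muOK (fun u => (dK (u,0)).1) ((dK (0,1)).2) /\
  forall u v, dK (u, v) = ((dK (u,0)).1, (dK (v,0)).1 + (dK (0,1)).2 * v).
Proof.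
case=> Hlin [[Hev Hod] Hl].
have kadd k l : dK (k + l) = dK k + dK l by have := Hlin 1 k l; rewrite !scale1r.
have ev u : (dK (u,0)).2 = 0 by exact: (Hev (u,0) erefl).
have od : (dK (0,1)).1 = 0 by exact: (Hod (0,1) erefl).
have d0v v : dK (0, v) = (0, (dK (v,0)).1 + (dK (0,1)).2 * v).
  have -> : ((0:Z), v) = Kmul delta (v, 0) (0, 1) by rewrite KmulE; apply: Kext => /=; dpush; zring.
  rewrite Hl !KmulE; move: (ev v) od.
  case: (dK (v,0)) => [m z]; case: (dK (0,1)) => [y al] /= -> ->.
  apply: Kext => /=; dpush; zring.
have duv u v : dK (u, v) = ((dK (u,0)).1, (dK (v,0)).1 + (dK (0,1)).2 * v).
  have -> : (u, v) = (u, 0) + ((0:Z), v) by apply: Kext => /=; rewrite ?addr0 ?add0r.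
  rewrite kadd d0v; move: (ev u); case: (dK (u,0)) => [m z] /= ->.
  by apply: Kext => /=; rewrite ?addr0 ?add0r.
have hl c u v : (dK (c *: u + v, 0)).1 = c *: (dK (u,0)).1 + (dK (v,0)).1.
  have -> : (c *: u + v, (0:Z)) = c *: (u, 0) + (v, 0) by apply: Kext => /=; rewrite ?scaler0 ?addr0.
  by rewrite Hlin.
have hm0 : (dK (0,0)).1 = 0.
  have := hl 1 0 0; rewrite [1 *: (0:Z)]scale1r [(0:Z) + 0]addr0 scale1r => H.
  by apply: (addrI (dK (0,0)).1); rewrite -H addr0.
have hN x : (dK (-x, 0)).1 = - (dK (x,0)).1.
  by have := hl (-1) x 0; rewrite scaleN1r addr0 hm0 addr0 scaleN1r.
split => //; split => //.
- move=> u v.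
  have -> : (u * v, (0:Z)) = Kmul delta (u,0) (v,0) by rewrite KmulE; apply: Kext => /=; dpush; zring.
  rewrite Hl !KmulE /= !ev; dpush; zring.
- move=> u /=; rewrite -[LHS]opprK -hN.
  have -> : (- delta u, (0:Z)) = Kmul delta (0,1) (0,u) by rewrite KmulE; apply: Kext => /=; dpush; zring.
  rewrite Hl d0v !KmulE /= od; dpush; zring.
Qed.

Lemma Part1 d : DerJ0g delta (false, false) d <->
      exists dK : KK -> KK, DerK0 delta dK /\ forall c, d c = tildeJ dK c.
Proof.
split.
- move=> H; have [mu [al [Hmu HG]]] := Gr00 H.
  exists (checkK mu al); split; first exact: checkK_der.
  by move=> c; rewrite HG (@tildeE (checkK mu al) mu al (fun u v => erefl) (m1 Hmu) (m0 Hmu) c).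
- move=> [dK [HK Hd]]; have [Hmu Hform] := DerK_char HK.
  have Ht := tildeE Hform (m1 Hmu) (m0 Hmu).
  have -> : d = GG (fun u => (dK (u,0)).1) ((dK (0,1)).2) 0 0 0.
    by apply: functional_extensionality => c; rewrite Hd Ht.
  split; first exact: GG_der.
  exact: GG_grad00 (m0 Hmu) erefl erefl erefl.
Qed.

Lemma Gq_iota_InderJ00 g : InderJ00 delta (Gq (iota g)).
Proof.
split.
  apply: (@Dspan_InderJ (eq xJ) ZxJ true true).
  - apply: (Dspan1 (a := xJ) (b := gxJ g)) => //; first by exists g.
    by move=> c; rewrite Dop_xgx.
  - by move=> x <-.
  - by move=> y [f ->].
split; first by case: (Gq_der (iota g)) => _ [].
apply: GG_grad00 => //; cbc; dpush; zring.
Qed.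

Lemma Inder00_char d : InderJ00 delta d -> exists g, forall c, d c = Gq (iota g) c.
Proof.
move=> [HI [Hev Hgr]]; have [P HP] := InderJ_even HI Hev.
have [_ _ A2 A3] := inGr_get (Hgr _ _ w1_gr).
have [_ _ _ B3] := inGr_get (Hgr _ _ w2_gr).
have [a2 _] := A2 ltac:(nd); have [a3 _] := A3 ltac:(nd); have [b3 _] := B3 ltac:(nd).
rewrite HP in a2; rewrite HP in a3; rewrite HP in b3.
have p3 : e3 P = 0.
  have : e3 P = - e2 (Gq P w1) by rewrite /Gq /GG; cc; dpush; zring.
  by rewrite a2 oppr0.
have p2 : e2 P = 0.
  have : e2 P = e3 (Gq P w1) by rewrite /Gq /GG; cc; dpush; zring.
  by rewrite a3.
have p1 : e1 P = 0.
  have : e1 P = - e3 (Gq P w2) by rewrite /Gq /GG; cc; dpush; zring.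
  by rewrite b3 oppr0.
exists (e0 P) => c; rewrite HP; congr (_ c); apply: Gq_ext; cc; by rewrite ?p1 ?p2 ?p3.
Qed.

Lemma Dspan_x_char d : Dspan delta (eq xJ) ZxJ true true d -> exists g, forall c, d c = Gq (iota g) c.
Proof.
move=> [n [k [xs [ys [Hxy Hd]]]]].
exists (\sum_(i < n) k i *: o0 (ys i)) => c; rewrite Hd.
transitivity (\sum_(i < n) k i *: Gq (iota (o0 (ys i))) c).
  by apply: eq_bigr => i _; case: (Hxy i) => <- [g ->]; rewrite Dop_xgx.
by rewrite Gq_sum (lin_sum (L := iota)) // => *; exact: iotaL.
Qed.

Lemma Part2 d : InderJ00 delta d <-> Dspan delta (eq xJ) ZxJ true true d.
Proof.
split.
- move=> H; have [g Hg] := Inder00_char H.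
  apply: (Dspan1 (a := xJ) (b := gxJ g)) => //; first by exists g.
  by move=> c; rewrite Hg Dop_xgx.
- move=> H; have [g Hg] := Dspan_x_char H.
  have -> : d = Gq (iota g) by apply: functional_extensionality.
  exact: Gq_iota_InderJ00.
Qed.

Lemma DopK_xgx g (k : KK) : DopK delta true true (0,1) (0,g) k =
  (-(g * delta k.1 + g * delta k.1), -(g * delta k.2 + g * delta k.2) + delta g * k.2).
Proof.
rewrite /DopK /= expr1 scaleN1r opprK !KmulE; apply: Kext => /=; dpush; zring.
Qed.

Lemma K1D (k l : KK) : (k + l).1 = k.1 + l.1. Proof. by []. Qed.
Lemma K2D (k l : KK) : (k + l).2 = k.2 + l.2. Proof. by []. Qed.
Lemma K1N (k : KK) : (- k).1 = - k.1. Proof. by []. Qed.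
Lemma K2N (k : KK) : (- k).2 = - k.2. Proof. by []. Qed.
Lemma K1Z c (k : KK) : (c *: k).1 = c *: k.1. Proof. by []. Qed.
Lemma K2Z c (k : KK) : (c *: k).2 = c *: k.2. Proof. by []. Qed.
Ltac ksimp := rewrite ?K1D ?K2D ?K1N ?K2N ?K1Z ?K2Z.

Lemma iK_lin c (k l : KK) : iK (c *: k + l) = c *: iK k + iK l.
Proof. apply: Jext; rewrite /iK; cc; cbn [fst snd]; ksimp; rewrite ?scE; zring. Qed.
Lemma iK_Kmul (k l : KK) : iK (Kmul delta k l) = Jmul delta (iK k) (iK l).
Proof. rewrite KmulE; apply: Jext; rewrite /iK; cc; cbn [fst snd]; cc; dpush; zring. Qed.
Lemma iK_B (k l : KK) (s : F) : iK (k - s *: l) = iK k - s *: iK l.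
Proof. apply: Jext; rewrite /iK; cc; cbn [fst snd]; ksimp; rewrite ?scE; zring. Qed.
Lemma iK_DopK pa pb a b k : iK (DopK delta pa pb a b k) = Dop delta pa pb (iK a) (iK b) (iK k).
Proof. by rewrite /DopK /Dop iK_B !iK_Kmul. Qed.
Lemma pK_iK (k : KK) : pK (iK k) = k.
Proof. by case: k. Qed.
Lemma homogK_iK p (k : KK) : homogK p k -> homog p (iK k).
Proof.
case: k => u v; case: p => /= H.
- by apply: isOddI; rewrite /iK; cc; rewrite ?H.
- by apply: isEvenI; rewrite /iK; cc; rewrite ?H.
Qed.
Lemma pe_iK (u v : Z) : pe (iK (u, v)) = iK (u, 0).
Proof. by apply: Jext; rewrite /pe /iK; cc. Qed.
Lemma po_iK (u v : Z) : po (iK (u, v)) = iK (0, v).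
Proof. by apply: Jext; rewrite /po /iK; cc. Qed.

Lemma iK_split (u v : Z) : iK (u, 0) + iK (0, v) = iK (u, v).
Proof. apply: Jext; rewrite /iK; cc; cbn [fst snd]; zring. Qed.

Lemma Part3 d : InderJ00 delta d <->
      exists dK : KK -> KK, InderK0 delta dK /\ forall c, d c = tildeJ dK c.
Proof.
split.
- move=> H; have [g Hg] := Inder00_char H.
  exists (DopK delta true true (0,1) (0,g)); split.
  + split.
    * exists 1%N, (fun _ => 1), (fun _ => true), (fun _ => true), (fun _ => (0,1)), (fun _ => (0,g)).
      by split => // c; rewrite big_ord1 scale1r.
    * by split=> k; rewrite /isEvenK /isOddK DopK_xgx /= => ->; dpush; zring.
  + move=> c; rewrite Hg (@tildeE _ (fun u => -(g * delta u + g * delta u)) (delta g)) //.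
    * by move=> u v; rewrite DopK_xgx.
    * by rewrite /= d1; zring.
    * by rewrite /= d0; zring.
- move=> [dK [[[n [k [pa [pb [xs [ys [Hh HdK]]]]]]] [HevK HodK]] Hd]].
  have Hh' : forall i, homog (pa i) (iK (xs i)) /\ homog (pb i) (iK (ys i)).
    by move=> i; case: (Hh i) => ? ?; split; apply: homogK_iK.
  have [P HP] := InderDecomp k Hh'.
  have lift l : iK (dK l) = \sum_(i < n) k i *: Dop delta (pa i) (pb i) (iK (xs i)) (iK (ys i)) (iK l).
    by rewrite HdK (lin_sum iK_lin); apply: eq_bigr => i _; rewrite iK_DopK.
  have dadd u v : \sum_(i < n) k i *: Dop delta (pa i) (pb i) (iK (xs i)) (iK (ys i)) (u + v) =
     \sum_(i < n) k i *: Dop delta (pa i) (pb i) (iK (xs i)) (iK (ys i)) u +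
     \sum_(i < n) k i *: Dop delta (pa i) (pb i) (iK (xs i)) (iK (ys i)) v.
    by rewrite -big_split /=; apply: eq_bigr => i _; rewrite Dop_add scalerDr.
  have form u v : dK (u, v) = ((fun u => -(e0 P * delta u + e0 P * delta u)) u,
      (fun u => -(e0 P * delta u + e0 P * delta u)) v + delta (e0 P) * v).
    have E1 : iK (dK (u, v)) = Gq P (iK (u, v)).
      rewrite -HP pe_iK po_iK -!lift.
      rewrite (pe_even (homogK_iK (p := false) (HevK (u,0) erefl))).
      rewrite (po_odd (homogK_iK (p := true) (HodK (0,v) erefl))).
      by rewrite !lift -dadd iK_split.
    have := congr1 pK E1; rewrite pK_iK => ->.
    apply: Kext; rewrite /pK /Gq /GG /iK; cbn [fst snd]; cc; dpush; zring.
  have Ht := tildeE form ltac:(by rewrite /= d1; zring) ltac:(by rewrite /= d0; zring).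
  have -> : d = Gq (iota (e0 P)) by apply: functional_extensionality => c; rewrite Hd Ht.
  exact: Gq_iota_InderJ00.
Qed.

Lemma halfZ (h : Z) : exists g, g + g = h.
Proof.
exists ((2%:R : F)^-1 *: h).
have e : ((2%:R : F)^-1 + (2%:R)^-1) = 1.
  by transitivity ((2%:R : F) * (2%:R)^-1); [rewrite mulr_natl mulr2n | exact: mulfV h2F].
by rewrite -scalerDl e scale1r.
Qed.

Lemma Part4 d : InderJ00 delta d <->
      exists h a : Z,
        (forall g : Z, h * delta (delta g) - delta (h * delta g) = 2%:R * a * delta g) /\
        forall c, d c = tildeJ (checkK (fun g => h * delta g) a) c.
Proof.
split.
- move=> H; have [g Hg] := Inder00_char H.
  exists (-(g + g)), (delta g); split.
  + by move=> u; rewrite mulr2n; dpush; zring.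
  + move=> c; rewrite Hg (@tildeE (checkK (fun g0 => -(g + g) * delta g0) (delta g))
       (fun g0 => -(g + g) * delta g0) (delta g) (fun u v => erefl)).
    * by apply: Jext; rewrite /Gq /GG; cc; dpush; zring.
    * by rewrite /= d1; zring.
    * by rewrite /= d0; zring.
- move=> [h [a [Hc Hd]]].
  have Ha : delta h + (a + a) = 0.
    apply: cancelZ => u; have := Hc u; rewrite mulr2n; dpush => /eqP; rewrite -subr_eq0 => /eqP H0.
    by rewrite -[RHS]oppr0 -H0; zring.
  have [g Hg] := halfZ (- h).
  have hE : h = -(g + g) by rewrite Hg opprK.
  have ag : a = delta g.
    apply: twoK2; rewrite -dD Hg dN.
    by rewrite -[a + a](addKr (delta h)) Ha addr0.
  have -> : d = Gq (iota g).
    apply: functional_extensionality => c.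
    rewrite Hd (@tildeE (checkK (fun g0 => h * delta g0) a) (fun g0 => h * delta g0) a (fun u v => erefl)).
    + by rewrite hE ag; apply: Jext; rewrite /Gq /GG; cc; dpush; zring.
    + by rewrite /= d1; zring.
    + by rewrite /= d0; zring.
  exact: Gq_iota_InderJ00.
Qed.

Lemma Part5 d : DerJ0g delta (true, false) d <-> Dspan delta (eq w2) Zw3 false false d.
Proof.
split.
- move=> H; have [f Hf] := Gr10 H.
  apply: (Dspan1 (a := w2) (b := mkJ 0 0 0 f 0 0 0 0)) => //; first by exists f.
  move=> c; rewrite Hf (DopEE _ (erefl : isEven (w2 : JJ)) (erefl : isEven (mkJ 0 0 0 f 0 0 0 0 : JJ))).
  by apply: Jext; rewrite /Gq /GG /parEE; cc; dpush; zring.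
- move=> [n [k [xs [ys [Hxy Hd]]]]].
  have -> : d = Gq (mkJ 0 (\sum_(i < n) k i *: e3 (ys i)) 0 0 0 0 0 0).
    apply: functional_extensionality => c; rewrite Hd.
    transitivity (\sum_(i < n) k i *: Gq (mkJ 0 (e3 (ys i)) 0 0 0 0 0 0) c).
      apply: eq_bigr => i _; case: (Hxy i) => <- [f ->].
      rewrite (DopEE _ (erefl : isEven (w2 : JJ)) (erefl : isEven (mkJ 0 0 0 f 0 0 0 0 : JJ))).
      by congr (_ *: _); congr (_ c); apply: Gq_ext; rewrite /parEE; cc; zring.
    rewrite Gq_sum (lin_sum (L := fun f : Z => (mkJ 0 f 0 0 0 0 0 0 : JJ))) //.
    by move=> *; apply: Jext; cc; zring.
  split; first exact: Gq_der.
  apply: GG_grad10.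
  + by move=> u; rewrite e0mk; zring.
  + by rewrite e0mk d0.
  + by rewrite e2mk.
  + by rewrite e3mk.
Qed.

Lemma Part6 d : DerJ0g delta (false, true) d <-> Dspan delta (eq w3) Zw1 false false d.
Proof.
split.
- move=> H; have [f Hf] := Gr01 H.
  apply: (Dspan1 (a := w3) (b := mkJ 0 f 0 0 0 0 0 0)) => //; first by exists f.
  move=> c; rewrite Hf (DopEE _ (erefl : isEven (w3 : JJ)) (erefl : isEven (mkJ 0 f 0 0 0 0 0 0 : JJ))).
  by apply: Jext; rewrite /Gq /GG /parEE; cc; dpush; zring.
- move=> [n [k [xs [ys [Hxy Hd]]]]].
  have -> : d = Gq (mkJ 0 0 (\sum_(i < n) k i *: e1 (ys i)) 0 0 0 0 0).
    apply: functional_extensionality => c; rewrite Hd.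
    transitivity (\sum_(i < n) k i *: Gq (mkJ 0 0 (e1 (ys i)) 0 0 0 0 0) c).
      apply: eq_bigr => i _; case: (Hxy i) => <- [f ->].
      rewrite (DopEE _ (erefl : isEven (w3 : JJ)) (erefl : isEven (mkJ 0 f 0 0 0 0 0 0 : JJ))).
      by congr (_ *: _); congr (_ c); apply: Gq_ext; rewrite /parEE; cc; zring.
    rewrite Gq_sum (lin_sum (L := fun f : Z => (mkJ 0 0 f 0 0 0 0 0 : JJ))) //.
    by move=> *; apply: Jext; cc; zring.
  split; first exact: Gq_der.
  apply: GG_grad01.
  + by move=> u; rewrite e0mk; zring.
  + by rewrite e0mk d0.
  + by rewrite e1mk.
  + by rewrite e3mk.
Qed.

Lemma Part7 d : DerJ0g delta (true, true) d <-> Dspan delta (eq w1) Zw2 false false d.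
Proof.
split.
- move=> H; have [f Hf] := Gr11 H.
  apply: (Dspan1 (a := w1) (b := mkJ 0 0 f 0 0 0 0 0)) => //; first by exists f.
  move=> c; rewrite Hf (DopEE _ (erefl : isEven (w1 : JJ)) (erefl : isEven (mkJ 0 0 f 0 0 0 0 0 : JJ))).
  by apply: Jext; rewrite /Gq /GG /parEE; cc; dpush; zring.
- move=> [n [k [xs [ys [Hxy Hd]]]]].
  have -> : d = Gq (mkJ 0 0 0 (\sum_(i < n) k i *: e2 (ys i)) 0 0 0 0).
    apply: functional_extensionality => c; rewrite Hd.
    transitivity (\sum_(i < n) k i *: Gq (mkJ 0 0 0 (e2 (ys i)) 0 0 0 0) c).
      apply: eq_bigr => i _; case: (Hxy i) => <- [f ->].
      rewrite (DopEE _ (erefl : isEven (w1 : JJ)) (erefl : isEven (mkJ 0 0 f 0 0 0 0 0 : JJ))).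
      by congr (_ *: _); congr (_ c); apply: Gq_ext; rewrite /parEE; cc; zring.
    rewrite Gq_sum (lin_sum (L := fun f : Z => (mkJ 0 0 0 f 0 0 0 0 : JJ))) //.
    by move=> *; apply: Jext; cc; zring.
  split; first exact: Gq_der.
  apply: GG_grad11.
  + by move=> u; rewrite e0mk; zring.
  + by rewrite e0mk d0.
  + by rewrite e1mk.
  + by rewrite e2mk.
Qed.

Lemma Part8 d : DerJ0 delta d ->
      exists d00 d10 d01 d11 : JJ -> JJ,
        [/\ DerJ0g delta (false, false) d00, DerJ0g delta (true, false) d10,
            DerJ0g delta (false, true) d01, DerJ0g delta (true, true) d11 &
            forall c, d c = d00 c + d10 c + d01 c + d11 c].
Proof.
move=> Hd; have [mu [al [f1 [f2 [f3 [Hmu HG]]]]]] := GEN Hd.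
exists (GG mu al 0 0 0), (GG (fun _ => 0) 0 f1 0 0), (GG (fun _ => 0) 0 0 f2 0),
  (GG (fun _ => 0) 0 0 0 f3); split.
- by split; [exact: GG_der | exact: GG_grad00 (m0 Hmu) erefl erefl erefl].
- by split; [exact: GG_der mu0OK | exact: GG_grad10].
- by split; [exact: GG_der mu0OK | exact: GG_grad01].
- by split; [exact: GG_der mu0OK | exact: GG_grad11].
- by move=> c; rewrite HG /GG; jcomp.
Qed.

Lemma Part9 d00 d10 d01 d11 :
      DerJ0g delta (false, false) d00 -> DerJ0g delta (true, false) d10 ->
      DerJ0g delta (false, true) d01 -> DerJ0g delta (true, true) d11 ->
      (forall c, d00 c + d10 c + d01 c + d11 c = 0) ->
      forall c, [/\ d00 c = 0, d10 c = 0, d01 c = 0 & d11 c = 0].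
Proof.
move=> H00 H10 H01 H11 S.
have [mu [al [Hmu E00]]] := Gr00 H00.
have [f1 E10] := Gr10 H10; have [f2 E01] := Gr01 H01; have [f3 E11] := Gr11 H11.
have S' c : GG mu al 0 0 0 c + GG (fun _ => 0) 0 f1 0 0 c + GG (fun _ => 0) 0 0 f2 0 c
   + GG (fun _ => 0) 0 0 0 f3 c = 0 by rewrite -E00 -E10 -E01 -E11.
have Hm h : mu h = 0.
  have : mu h = e0 (GG mu al 0 0 0 (iota h) + GG (fun _ => 0) 0 f1 0 0 (iota h) +
     GG (fun _ => 0) 0 0 f2 0 (iota h) + GG (fun _ => 0) 0 0 0 f3 (iota h)).
    by rewrite /GG; cc; rewrite ?(m0 Hmu); dpush; zring.
  by rewrite S' e00.
have alz : al = 0.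
  have : al = o0 (GG mu al 0 0 0 xJ + GG (fun _ => 0) 0 f1 0 0 xJ +
     GG (fun _ => 0) 0 0 f2 0 xJ + GG (fun _ => 0) 0 0 0 f3 xJ).
    by rewrite /GG; cc; rewrite ?Hm; dpush; zring.
  by rewrite S' o00.
have f1z : f1 = 0.
  have : f1 = - e3 (GG mu al 0 0 0 w2 + GG (fun _ => 0) 0 f1 0 0 w2 +
     GG (fun _ => 0) 0 0 f2 0 w2 + GG (fun _ => 0) 0 0 0 f3 w2).
    by rewrite /GG; cc; rewrite ?Hm; dpush; zring.
  by rewrite S' e30 oppr0.
have f2z : f2 = 0.
  have : f2 = e3 (GG mu al 0 0 0 w1 + GG (fun _ => 0) 0 f1 0 0 w1 +
     GG (fun _ => 0) 0 0 f2 0 w1 + GG (fun _ => 0) 0 0 0 f3 w1).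
    by rewrite /GG; cc; rewrite ?Hm; dpush; zring.
  by rewrite S' e30.
have f3z : f3 = 0.
  have : f3 = - e2 (GG mu al 0 0 0 w1 + GG (fun _ => 0) 0 f1 0 0 w1 +
     GG (fun _ => 0) 0 0 f2 0 w1 + GG (fun _ => 0) 0 0 0 f3 w1).
    by rewrite /GG; cc; rewrite ?Hm; dpush; zring.
  by rewrite S' e20 oppr0.
move=> c; rewrite E00 E10 E01 E11 f1z f2z f3z alz; split; apply: Jext; rewrite /GG; cc;
  rewrite ?Hm; dpush; zring.
Qed.

Lemma Part10 (al : bool * bool) (d : JJ -> JJ) :
      al <> (false, false) -> DerJ0g delta al d -> InderJ delta d.
Proof.
case: al => [[] []] Hne H.
- apply: (Dspan_InderJ (proj1 (Part7 d) H)) => [x <- | y [f ->]]; exact: erefl.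
- apply: (Dspan_InderJ (proj1 (Part5 d) H)) => [x <- | y [f ->]]; exact: erefl.
- apply: (Dspan_InderJ (proj1 (Part6 d) H)) => [x <- | y [f ->]]; exact: erefl.
- by case: Hne.
Qed.

Theorem main_sec :
  (forall d : @J F Z -> @J F Z,
      DerJ0g delta (false, false) d <->
      exists dK : @K F Z -> @K F Z, DerK0 delta dK /\ forall c, d c = tildeJ dK c) /\
  (forall d : @J F Z -> @J F Z,
      InderJ00 delta d <-> Dspan delta (eq xJ) ZxJ true true d) /\
  (forall d : @J F Z -> @J F Z,
      InderJ00 delta d <->
      exists dK : @K F Z -> @K F Z, InderK0 delta dK /\ forall c, d c = tildeJ dK c) /\
  (forall d : @J F Z -> @J F Z,
      InderJ00 delta d <->
      exists h a : Z,
        (forall g : Z, h * delta (delta g) - delta (h * delta g) = 2%:R * a * delta g) /\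
        forall c, d c = tildeJ (checkK (fun g => h * delta g) a) c) /\
  (forall d : @J F Z -> @J F Z,
      DerJ0g delta (true, false) d <-> Dspan delta (eq w2) Zw3 false false d) /\
  (forall d : @J F Z -> @J F Z,
      DerJ0g delta (false, true) d <-> Dspan delta (eq w3) Zw1 false false d) /\
  (forall d : @J F Z -> @J F Z,
      DerJ0g delta (true, true) d <-> Dspan delta (eq w1) Zw2 false false d) /\
  (forall d : @J F Z -> @J F Z, DerJ0 delta d ->
      exists d00 d10 d01 d11 : @J F Z -> @J F Z,
        [/\ DerJ0g delta (false, false) d00, DerJ0g delta (true, false) d10,
            DerJ0g delta (false, true) d01, DerJ0g delta (true, true) d11 &
            forall c, d c = d00 c + d10 c + d01 c + d11 c]) /\
  (forall d00 d10 d01 d11 : @J F Z -> @J F Z,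
      DerJ0g delta (false, false) d00 -> DerJ0g delta (true, false) d10 ->
      DerJ0g delta (false, true) d01 -> DerJ0g delta (true, true) d11 ->
      (forall c, d00 c + d10 c + d01 c + d11 c = 0) ->
      forall c, [/\ d00 c = 0, d10 c = 0, d01 c = 0 & d11 c = 0]) /\
  (forall (al : bool * bool) (d : @J F Z -> @J F Z),
      al <> (false, false) -> DerJ0g delta al d -> InderJ delta d).
Proof.
split; first exact: Part1.
split; first exact: Part2.
split; first exact: Part3.
split; first exact: Part4.
split; first exact: Part5.
split; first exact: Part6.
split; first exact: Part7.
split; first exact: Part8.
split; first exact: Part9.
exact: Part10.
Qed.

End Main.

Unset Implicit Arguments.

Theorem proposition4p1 (F : fieldType) (Z : comAlgType F) (delta : Z -> Z)
    (hchar : 2%N \notin [pchar F])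
    (hlin : forall (k : F) (u v : Z), delta (k *: u + v) = k *: delta u + delta v)
    (hleib : forall u v : Z, delta (u * v) = delta u * v + u * delta v)
    (hspan : forall z : Z, exists (n : nat) (k : 'I_n -> F) (fs gs : 'I_n -> Z),
        z = \sum_(i < n) k i *: (fs i * delta (gs i))) :
  (forall d : @J F Z -> @J F Z,
      DerJ0g delta (false, false) d <->
      exists dK : @K F Z -> @K F Z, DerK0 delta dK /\ forall c, d c = tildeJ dK c) /\
  (forall d : @J F Z -> @J F Z,
      InderJ00 delta d <-> Dspan delta (eq xJ) ZxJ true true d) /\
  (forall d : @J F Z -> @J F Z,
      InderJ00 delta d <->
      exists dK : @K F Z -> @K F Z, InderK0 delta dK /\ forall c, d c = tildeJ dK c) /\
  (forall d : @J F Z -> @J F Z,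
      InderJ00 delta d <->
      exists h a : Z,
        (forall g : Z, h * delta (delta g) - delta (h * delta g) = 2%:R * a * delta g) /\
        forall c, d c = tildeJ (checkK (fun g => h * delta g) a) c) /\
  (forall d : @J F Z -> @J F Z,
      DerJ0g delta (true, false) d <-> Dspan delta (eq w2) Zw3 false false d) /\
  (forall d : @J F Z -> @J F Z,
      DerJ0g delta (false, true) d <-> Dspan delta (eq w3) Zw1 false false d) /\
  (forall d : @J F Z -> @J F Z,
      DerJ0g delta (true, true) d <-> Dspan delta (eq w1) Zw2 false false d) /\
  (forall d : @J F Z -> @J F Z, DerJ0 delta d ->
      exists d00 d10 d01 d11 : @J F Z -> @J F Z,
        [/\ DerJ0g delta (false, false) d00, DerJ0g delta (true, false) d10,
            DerJ0g delta (false, true) d01, DerJ0g delta (true, true) d11 &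
            forall c, d c = d00 c + d10 c + d01 c + d11 c]) /\
  (forall d00 d10 d01 d11 : @J F Z -> @J F Z,
      DerJ0g delta (false, false) d00 -> DerJ0g delta (true, false) d10 ->
      DerJ0g delta (false, true) d01 -> DerJ0g delta (true, true) d11 ->
      (forall c, d00 c + d10 c + d01 c + d11 c = 0) ->
      forall c, [/\ d00 c = 0, d10 c = 0, d01 c = 0 & d11 c = 0]) /\
  (forall (al : bool * bool) (d : @J F Z -> @J F Z),
      al <> (false, false) -> DerJ0g delta al d -> InderJ delta d).
Proof. by apply: main_sec. Qed.
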